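(* Let $q\in\mathbb{C}$, $|q|<1$, $\ell\in\mathbb{N}$ and $\alpha_j,\beta_j\in\mathbb{N}$ for $j=1,\dots,\ell$. In $\mathbb{Q}\langle\pi,y\rangle$ consider $$X=(\pi-\mathbf{1})^{\alpha_1-1}\rho\,y^{\beta_1}(\pi-\mathbf{1})^{\alpha_2}y^{\beta_2}\cdots(\pi-\mathbf{1})^{\alpha_\ell}y^{\beta_\ell},\quad X^\vee=(\pi-\mathbf{1})^{\beta_\ell-1}\rho\,y^{\alpha_\ell}(\pi-\mathbf{1})^{\beta_{\ell-1}}y^{\alpha_{\ell-1}}\cdots(\pi-\mathbf{1})^{\beta_1}y^{\alpha_1}.$$ Then $\mathfrak{z}_q^{\mathrm{III}}[X]=\mathfrak{z}_q^{\mathrm{III}}[X^\vee]$.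
   Context: $\mathbb{Q}\langle\pi,y\rangle$ is the free noncommutative $\mathbb{Q}$-algebra on $\pi,y$, $\mathbf{1}$ its unit, $\rho:=\pi-\mathbf{1}$. For $\mathbf{s}=(s_1,\dots,s_d)$ with $s_1\ge1$, $s_j\ge0$, let $W(\mathbf{s})=\pi^{s_1-1}\rho y\pi^{s_2}y\cdots\pi^{s_d}y$ and $\mathfrak{z}_q^{\mathrm{III}}[\mathbf{s}]=\sum_{k_1>\dots>k_d>0}\frac{q^{k_1}}{\prod_j(1-q^{k_j})^{s_j}}$. $\mathfrak{z}_q^{\mathrm{III}}$ is extended to the $\mathbb{Q}$-span of the elements $W(\mathbf{s})$ linearly by $\mathfrak{z}_q^{\mathrm{III}}[W(\mathbf{s})]=\mathfrak{z}_q^{\mathrm{III}}[\mathbf{s}]$; expanding the powers of $\pi-\mathbf{1}$ shows $X,X^\vee$ lie in this span. *)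

(* Defs.v *)
From Stdlib Require Import Reals QArith Qreals List Arith.
From Coquelicot Require Import Coquelicot.
Import ListNotations.

Inductive letter : Set := Pi | Yl.
Definition word := list letter.

(** An element of Q<pi,y>, given as a formal (finite) Q-linear combination
    of words: the list [(c1,w1); ...; (cn,wn)] stands for c1 w1 + ... + cn wn.
    Two lists denote the same algebra element iff they have the same
    coefficient function [nc_coef]. *)
Definition ncpoly := list (Q * word).

Fixpoint word_eqb (u v : word) : bool :=
  match u, v with
  | [], [] => true
  | Pi :: u', Pi :: v' => word_eqb u' v'
  | Yl :: u', Yl :: v' => word_eqb u' v'
  | _, _ => false
  end.

Definition nc_coef (a : ncpoly) (w : word) : Q :=
  fold_right (fun p acc => if word_eqb (snd p) w then (fst p + acc)%Q else acc) 0%Q a.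

Definition nc_one : ncpoly := [(1%Q, [])].
Definition nc_pi  : ncpoly := [(1%Q, [Pi])].
Definition nc_y   : ncpoly := [(1%Q, [Yl])].
Definition nc_add (a b : ncpoly) : ncpoly := a ++ b.
Definition nc_scale (c : Q) (a : ncpoly) : ncpoly :=
  map (fun p => (c * fst p, snd p)%Q) a.
Definition nc_sub (a b : ncpoly) : ncpoly := nc_add a (nc_scale (-1)%Q b).
Definition nc_mul (a b : ncpoly) : ncpoly :=
  flat_map (fun p => map (fun r => (fst p * fst r, snd p ++ snd r)%Q) b) a.
Fixpoint nc_pow (a : ncpoly) (n : nat) : ncpoly :=
  match n with O => nc_one | S n' => nc_mul a (nc_pow a n') end.
Definition nc_prod (l : list ncpoly) : ncpoly := fold_right nc_mul nc_one l.

Definition nc_rho : ncpoly := nc_sub nc_pi nc_one.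

Definition nc_W (s : list nat) : ncpoly :=
  match s with
  | [] => nc_one (* not used: d >= 1 *)
  | s1 :: s' =>
      nc_prod ([nc_pow nc_pi (s1 - 1); nc_rho; nc_y]
               ++ flat_map (fun sj => [nc_pow nc_pi sj; nc_y]) s')
  end.

Fixpoint sumC (f : nat -> C) (n : nat) : C :=
  match n with O => RtoC 0 | S n' => Cplus (sumC f n') (f n') end.

(** [inner q s n] = sum over n >= k_1 > k_2 > ... > k_m > 0 of
    prod_j 1/(1-q^{k_j})^{s_j}, for s = (s_1,...,s_m); equals 1 if m = 0. *)
Fixpoint inner (q : C) (s : list nat) (n : nat) : C :=
  match s with
  | [] => RtoC 1
  | sj :: s' =>
      sumC (fun k => Cmult (Cinv (Cpow (Cminus (RtoC 1) (Cpow q (S k))) sj))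
                           (inner q s' k)) n
  end.

(** N-th partial sum: sum over N >= k_1 > ... > k_d > 0 of
    q^{k_1} / prod_j (1-q^{k_j})^{s_j}. *)
Definition zIII_partial (q : C) (s : list nat) (N : nat) : C :=
  match s with
  | [] => RtoC 0
  | s1 :: s' =>
      sumC (fun k => Cmult (Cmult (Cpow q (S k))
                                  (Cinv (Cpow (Cminus (RtoC 1) (Cpow q (S k))) s1)))
                           (inner q s' k)) N
  end.

Definition climit (u : nat -> C) : C :=
  (real (Lim_seq (fun n => Re (u n))), real (Lim_seq (fun n => Im (u n)))).

Definition zIII_s (q : C) (s : list nat) : C := climit (zIII_partial q s).

(** A word pi^{a1} y pi^{a2} y ... pi^{ad} y (d >= 1) is parsed to
    Some (a1+1, a2, ..., ad), i.e. the index s with W(s) = pi^{a1} rho y ...;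
    any other word gives None. *)
Fixpoint parse_aux (w : word) (cnt : nat) : option (list nat) :=
  match w with
  | [] => match cnt with O => Some [] | S _ => None end
  | Pi :: w' => parse_aux w' (S cnt)
  | Yl :: w' => option_map (cons cnt) (parse_aux w' O)
  end.

Definition parse (w : word) : option (list nat) :=
  match parse_aux w O with
  | Some (a1 :: r) => Some (S a1 :: r)
  | _ => None
  end.

(** value of z on rho * w, for a word w *)
Definition zword (q : C) (w : word) : C :=
  match parse w with Some s => zIII_s q s | None => RtoC 0 end.

Fixpoint lead_pi (u : word) : nat :=
  match u with Pi :: u' => S (lead_pi u') | _ => O end.

(** Every element E of span{W(s)} is uniquely E = rho * P with P a combination
    of words ending in y, and then P = rho_inv E, where the coefficient of a word
    w in P is sum_{k>=1} (coefficient of pi^k w in E).  [rho_inv] computes this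
    P entrywise: the entry (c, pi^m v) (v not starting with pi) contributes
    (c, pi^{m-k} v) for k = 1..m. *)
Definition rho_inv (E : ncpoly) : ncpoly :=
  flat_map (fun p => map (fun k => (fst p, skipn (S k) (snd p))) (seq 0 (lead_pi (snd p)))) E.

(** z_q^III[E] for E in span{W(s)}: z[rho * pi^{a1} y ... pi^{ad} y] := z[(a1+1,a2,..,ad)],
    extended linearly; i.e. z[E] = sum_{(c,w) in rho_inv E} c * zword w. *)
Definition zIII (q : C) (E : ncpoly) : C :=
  fold_right (fun p acc => Cplus (Cmult (RtoC (Q2R (fst p))) (zword q (snd p))) acc)
             (RtoC 0) (rho_inv E).

(* Main.v *)
Require Import Defs.
From Stdlib Require Import Reals QArith Qreals List Arith Lia Lra.
From Coquelicot Require Import Coquelicot.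
Import ListNotations.

Open Scope R_scope.

Ltac cgen := repeat match goal with
  | |- context [Cpow ?a ?n] => let z := fresh "z" in set (z := Cpow a n) in *
  | |- context [RtoC ?x] => lazymatch x with IZR _ => fail | _ => let z := fresh "z" in set (z := RtoC x) in * end
  end.
Ltac cring := try unfold word in *; cgen; ring.

Fixpoint sumR (f : nat -> R) (n : nat) : R :=
  match n with O => 0 | S n' => sumR f n' + f n' end.

Lemma sumC_ext f g n : (forall i, (i < n)%nat -> f i = g i) -> sumC f n = sumC g n.
Proof. induction n; simpl; intros H; auto. rewrite IHn by (intros; apply H; lia). rewrite H by lia. auto. Qed.
Lemma sumR_ext f g n : (forall i, (i < n)%nat -> f i = g i) -> sumR f n = sumR g n.
Proof. induction n; simpl; intros H; auto. rewrite IHn by (intros; apply H; lia). rewrite H by lia. auto. Qed.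

Lemma sumC_plus f g n : sumC (fun i => Cplus (f i) (g i)) n = Cplus (sumC f n) (sumC g n).
Proof. induction n; simpl. ring. rewrite IHn. ring. Qed.
Lemma sumR_plus f g n : sumR (fun i => f i + g i) n = sumR f n + sumR g n.
Proof. induction n; simpl. ring. rewrite IHn. ring. Qed.
Lemma sumC_scal c f n : sumC (fun i => Cmult c (f i)) n = Cmult c (sumC f n).
Proof. induction n; simpl. ring. rewrite IHn. ring. Qed.
Lemma sumR_scal c f n : sumR (fun i => c * f i) n = c * sumR f n.
Proof. induction n; simpl. ring. rewrite IHn. ring. Qed.
Lemma sumC_zero n : sumC (fun _ => RtoC 0) n = RtoC 0.
Proof. induction n; simpl; auto. rewrite IHn. ring. Qed.
Lemma sumC_exch f n m : sumC (fun i => sumC (fun j => f i j) m) n = sumC (fun j => sumC (fun i => f i j) n) m.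
Proof. induction n; simpl. rewrite sumC_zero. auto. rewrite IHn. rewrite <- sumC_plus. auto. Qed.
Lemma sumC_app f n e : sumC f (n + e) = Cplus (sumC f n) (sumC (fun i => f (n + i)%nat) e).
Proof. induction e; simpl. rewrite Nat.add_0_r. ring. rewrite Nat.add_succ_r. simpl. rewrite IHe. ring. Qed.
Lemma sumR_app f n e : sumR f (n + e) = sumR f n + sumR (fun i => f (n + i)%nat) e.
Proof. induction e; simpl. rewrite Nat.add_0_r. ring. rewrite Nat.add_succ_r. simpl. rewrite IHe. ring. Qed.
Lemma sumC_S_l f n : sumC f (S n) = Cplus (f O) (sumC (fun i => f (S i)) n).
Proof. induction n; simpl. ring. simpl in IHn. rewrite IHn. ring. Qed.
Lemma sumR_S_l f n : sumR f (S n) = f O + sumR (fun i => f (S i)) n.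
Proof. induction n; simpl. ring. simpl in IHn. rewrite IHn. ring. Qed.

Lemma sumC_rev f k : sumC f k = sumC (fun d => f (k - 1 - d)%nat) k.
Proof.
  induction k. simpl; auto.
  change (sumC f (S k)) with (Cplus (sumC f k) (f k)).
  rewrite (sumC_S_l (fun d => f (S k - 1 - d)%nat)). rewrite IHk.
  replace (S k - 1 - 0)%nat with k by lia.
  rewrite Cplus_comm. f_equal. apply sumC_ext. intros. f_equal. lia.
Qed.

Lemma sumC_guard f n K : sumC (fun d => if (d <? K)%nat then f d else RtoC 0) n = sumC f (Nat.min n K).
Proof.
  induction n. simpl. auto.
  change (sumC (fun d => if (d <? K)%nat then f d else RtoC 0) (S n)) with
    (Cplus (sumC (fun d => if (d <? K)%nat then f d else RtoC 0) n) (if (n <? K)%nat then f n else RtoC 0)).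
  rewrite IHn. destruct (Nat.ltb_spec n K).
  - replace (Nat.min (S n) K) with (S (Nat.min n K)) by lia. simpl. f_equal. f_equal. lia.
  - replace (Nat.min (S n) K) with (Nat.min n K) by lia. ring.
Qed.

Lemma sumC_tri (f : nat -> nat -> C) N K :
  sumC (fun k => sumC (fun d => if (d <? K)%nat then f d (k - 1 - d)%nat else RtoC 0) k) N
  = sumC (fun d => sumC (fun j => f d j) (N - 1 - d)) K.
Proof.
  induction N.
  - simpl. symmetry. etransitivity; [|apply (sumC_zero K)]. apply sumC_ext. intros. simpl. auto.
  - change (sumC (fun k => sumC (fun d => if (d <? K)%nat then f d (k - 1 - d)%nat else RtoC 0) k) (S N))
      with (Cplus (sumC (fun k => sumC (fun d => if (d <? K)%nat then f d (k - 1 - d)%nat else RtoC 0) k) N)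
                  (sumC (fun d => if (d <? K)%nat then f d (N - 1 - d)%nat else RtoC 0) N)).
    rewrite IHN. rewrite sumC_guard.
    transitivity (sumC (fun d => Cplus (sumC (fun j => f d j) (N - 1 - d))
          (if (d <? N)%nat then f d (N - 1 - d)%nat else RtoC 0)) K).
    + rewrite sumC_plus. f_equal. rewrite sumC_guard. rewrite Nat.min_comm. auto.
    + apply sumC_ext. intros d Hd. destruct (Nat.ltb_spec d N).
      * replace (S N - 1 - d)%nat with (S (N - 1 - d)) by lia. simpl. auto.
      * replace (S N - 1 - d)%nat with (N - 1 - d)%nat by lia. ring.
Qed.

Lemma Cmod_sumC f n : Cmod (sumC f n) <= sumR (fun i => Cmod (f i)) n.
Proof.
  induction n; simpl. rewrite Cmod_0. lra.
  eapply Rle_trans. apply Cmod_triangle. lra.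
Qed.

Lemma RtoC_sumR f n : RtoC (sumR f n) = sumC (fun i => RtoC (f i)) n.
Proof. induction n; simpl; auto. rewrite RtoC_plus, IHn. auto. Qed.

Lemma sumR_le f g n : (forall i, (i < n)%nat -> f i <= g i) -> sumR f n <= sumR g n.
Proof. induction n; simpl; intros H. lra. assert (f n <= g n) by (apply H; lia). assert (sumR f n <= sumR g n) by (apply IHn; intros; apply H; lia). lra. Qed.
Lemma sumR_nonneg f n : (forall i, (i < n)%nat -> 0 <= f i) -> 0 <= sumR f n.
Proof. induction n; simpl; intros H. lra. assert (0 <= f n) by (apply H; lia). assert (0 <= sumR f n) by (apply IHn; intros; apply H; lia). lra. Qed.
Lemma sumR_mono f n m : (n <= m)%nat -> (forall i, 0 <= f i) -> sumR f n <= sumR f m.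
Proof. intros H Hf. replace m with (n + (m - n))%nat by lia. rewrite sumR_app.
  assert (0 <= sumR (fun i => f (n + i)%nat) (m - n)) by (apply sumR_nonneg; auto). lra. Qed.

Definition Dom (x x' : C) (X X' : R) : Prop :=
  Cmod (Cminus x' x) <= X' - X /\ Cmod x <= X /\ X <= X'.

Lemma Dom_refl x X : Cmod x <= X -> Dom x x X X.
Proof. intros H. split; [|split]; auto; try lra. replace (Cminus x x) with (RtoC 0) by ring. rewrite Cmod_0. lra. Qed.
Lemma Dom_nonneg x x' X X' : Dom x x' X X' -> 0 <= X.
Proof. intros [_ [H _]]. pose proof (Cmod_ge_0 x). lra. Qed.
Lemma Dom_right x x' X X' : Dom x x' X X' -> Cmod x' <= X'.
Proof. intros [H1 [H2 H3]]. replace x' with (Cplus x (Cminus x' x)) by ring.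
  eapply Rle_trans. apply Cmod_triangle. lra. Qed.
Lemma Dom_zero : Dom (RtoC 0) (RtoC 0) 0 0.
Proof. apply Dom_refl. rewrite Cmod_0. lra. Qed.
Lemma Dom_add a a' A A' b b' B B' : Dom a a' A A' -> Dom b b' B B' -> Dom (Cplus a b) (Cplus a' b') (A + B) (A' + B').
Proof.
  intros [H1 [H2 H3]] [G1 [G2 G3]]. split; [|split]; try lra.
  - replace (Cminus (Cplus a' b') (Cplus a b)) with (Cplus (Cminus a' a) (Cminus b' b)) by ring.
    eapply Rle_trans. apply Cmod_triangle. lra.
  - eapply Rle_trans. apply Cmod_triangle. lra.
Qed.
Lemma Dom_mul a a' A A' b b' B B' : Dom a a' A A' -> Dom b b' B B' -> Dom (Cmult a b) (Cmult a' b') (A * B) (A' * B').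
Proof.
  intros Ha Hb. pose proof (Dom_right _ _ _ _ Hb) as Rb. pose proof (Dom_nonneg _ _ _ _ Ha) as Na.
  pose proof (Dom_nonneg _ _ _ _ Hb) as Nb.
  destruct Ha as [H1 [H2 H3]], Hb as [G1 [G2 G3]]. split; [|split].
  - replace (Cminus (Cmult a' b') (Cmult a b)) with (Cplus (Cmult (Cminus a' a) b') (Cmult a (Cminus b' b))) by ring.
    eapply Rle_trans. apply Cmod_triangle. rewrite !Cmod_mult.
    pose proof (Cmod_ge_0 (Cminus a' a)). pose proof (Cmod_ge_0 b'). pose proof (Cmod_ge_0 a). pose proof (Cmod_ge_0 (Cminus b' b)).
    apply Rle_trans with ((A' - A) * B' + A * (B' - B)); [|nra].
    apply Rplus_le_compat; apply Rmult_le_compat; lra.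
  - rewrite Cmod_mult. apply Rmult_le_compat; auto using Cmod_ge_0.
  - apply Rmult_le_compat; lra.
Qed.
Lemma Dom_sum f f' F F' n : (forall i, (i < n)%nat -> Dom (f i) (f' i) (F i) (F' i)) ->
  Dom (sumC f n) (sumC f' n) (sumR F n) (sumR F' n).
Proof. induction n; simpl; intros H. apply Dom_zero. apply Dom_add. apply IHn; intros; apply H; lia. apply H; lia. Qed.
Lemma Dom_ext0 x' X' : Cmod x' <= X' -> Dom (RtoC 0) x' 0 X'.
Proof. intros H. split; [|split]. replace (Cminus x' 0) with x' by ring. lra. rewrite Cmod_0. lra. pose proof (Cmod_ge_0 x'). lra. Qed.
Lemma Dom_sum_ext f f' F F' n n' : (n <= n')%nat ->
  (forall i, (i < n)%nat -> Dom (f i) (f' i) (F i) (F' i)) ->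
  (forall i, (n <= i)%nat -> (i < n')%nat -> Cmod (f' i) <= F' i) ->
  Dom (sumC f n) (sumC f' n') (sumR F n) (sumR F' n').
Proof.
  intros Hn H1 H2. replace n' with (n + (n' - n))%nat by lia. rewrite sumC_app, sumR_app.
  replace (sumC f n) with (Cplus (sumC f n) (RtoC 0)) by ring. replace (sumR F n) with (sumR F n + 0) by ring.
  apply Dom_add. apply Dom_sum; auto.
  apply Dom_ext0. eapply Rle_trans. apply Cmod_sumC. apply sumR_le. intros. apply H2; lia.
Qed.

Open Scope R_scope.

Inductive lt3 := LP | LA | LB.

Definition xq (q : C) k := Cinv (Cminus (RtoC 1) (Cpow q k)).
Definition tq q k := Cminus (xq q k) (RtoC 1).
Definition TC q (Ko : option nat) k : C :=
  match Ko with None => tq q k | Some K => sumC (fun m => Cpow q (k * S m)) K end.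
Definition tr (r : R) k := r ^ k / (1 - r ^ k).
Definition TR r (Ko : option nat) k : R :=
  match Ko with None => tr r k | Some K => sumR (fun m => r ^ (k * S m)) K end.
Definition dok (Do : option nat) d := match Do with None => true | Some D => (d <? D)%nat end.
Definition ole (a b : option nat) : Prop :=
  match a, b with _, None => True | None, Some _ => False | Some x, Some y => (x <= y)%nat end.

Fixpoint FT q Ko Do (w : list lt3) (k : nat) : C :=
  match w with
  | [] => if (k =? 0)%nat then RtoC 1 else RtoC 0
  | LP :: w' => Cmult (Cplus (RtoC 1) (TC q Ko k)) (FT q Ko Do w' k)
  | LA :: w' => Cmult (TC q Ko k) (FT q Ko Do w' k)
  | LB :: w' => sumC (fun d => if dok Do d then FT q Ko Do w' (k - 1 - d) else RtoC 0) k
  end.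
Fixpoint FTr r Ko Do (w : list lt3) (k : nat) : R :=
  match w with
  | [] => if (k =? 0)%nat then 1 else 0
  | LP :: w' => (1 + TR r Ko k) * FTr r Ko Do w' k
  | LA :: w' => TR r Ko k * FTr r Ko Do w' k
  | LB :: w' => sumR (fun d => if dok Do d then FTr r Ko Do w' (k - 1 - d) else 0) k
  end.

Fixpoint okb (w : list lt3) : bool :=
  match w with
  | [] => true
  | [LB] => true
  | [_] => false
  | _ :: w' => okb w'
  end.

Lemma okb_tail x w : okb (x :: w) = true -> okb w = true.
Proof. destruct w; auto. intros H. destruct x; exact H. Qed.
Lemma okb_In w : okb w = true -> w <> [] -> In LB w.
Proof. induction w as [|x w IH]; intros H Hn. congruence.
  destruct w. destruct x; try discriminate; simpl; auto.
  right. apply IH. apply (okb_tail x). auto. congruence. Qed.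
Lemma okb_cons_nonB x w : x <> LB -> okb (x :: w) = true -> In LB w.
Proof. intros Hx H. destruct w. destruct x; simpl in H; try discriminate; congruence.
  apply okb_In. apply (okb_tail x). auto. congruence. Qed.

Lemma FT_zero q Ko Do w : In LB w -> FT q Ko Do w 0 = RtoC 0.
Proof. induction w as [|x w IH]; simpl; intros H. contradiction.
  destruct x; destruct H as [H|H]; try discriminate; try (rewrite IH by auto; ring); auto. Qed.
Lemma FTr_zero r Ko Do w : In LB w -> FTr r Ko Do w 0 = 0.
Proof. induction w as [|x w IH]; simpl; intros H. contradiction.
  destruct x; destruct H as [H|H]; try discriminate; try (rewrite IH by auto; ring); auto. Qed.

Lemma Cpow_mul (q : C) a b : Cpow q (a * b) = Cpow (Cpow q a) b.
Proof. induction b. rewrite Nat.mul_0_r. auto.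
  replace (a * S b)%nat with (a + a * b)%nat by lia. rewrite Cpow_add_r, IHb. simpl. auto. Qed.

Lemma geomC (p : C) K : Cmult (Cminus (RtoC 1) p) (sumC (fun m => Cpow p (S m)) K) = Cminus p (Cpow p (S K)).
Proof. induction K. simpl. ring. change (sumC (fun m => Cpow p (S m)) (S K)) with
  (Cplus (sumC (fun m => Cpow p (S m)) K) (Cpow p (S K))). rewrite Cmult_plus_distr_l, IHK. simpl. ring. Qed.
Lemma geomR (p : R) K : (1 - p) * sumR (fun m => p ^ (S m)) K = p - p ^ (S K).
Proof. induction K. simpl. ring. change (sumR (fun m => p ^ (S m)) (S K)) with
  (sumR (fun m => p ^ (S m)) K + p ^ (S K)). rewrite Rmult_plus_distr_l, IHK. simpl. ring. Qed.

Section WithQ.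
Variable q : C.
Variable r : R.
Hypothesis Hr : r = Cmod q.
Hypothesis Hr1 : r < 1.

Lemma r_nonneg : 0 <= r.
Proof. rewrite Hr. apply Cmod_ge_0. Qed.

Lemma rk_lt1 k : (1 <= k)%nat -> 0 <= r ^ k < 1.
Proof. intros Hk. apply pow_lt_1_compat; [split; [apply r_nonneg|auto]|lia]. Qed.

Lemma Cmod_1m p : 1 - Cmod p <= Cmod (Cminus (RtoC 1) p).
Proof. pose proof (Cmod_triangle (Cminus (RtoC 1) p) p). replace (Cplus (Cminus (RtoC 1) p) p) with (RtoC 1) in H by ring.
  rewrite Cmod_1 in H. lra. Qed.

Lemma TC_some_cf K k : (1 <= k)%nat ->
  TC q (Some K) k = Cminus (tq q k) (Cmult (Cpow (Cpow q k) (S K)) (Cinv (Cminus (RtoC 1) (Cpow q k)))).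
Proof.
  intros Hk. pose proof (rk_lt1 k Hk) as Hrk.
  assert (Hp : Cminus (RtoC 1) (Cpow q k) <> RtoC 0).
  { intros E. pose proof (Cmod_1m (Cpow q k)). rewrite E, Cmod_0, Cmod_pow, <- Hr in H. lra. }
  unfold TC, tq, xq.
  assert (E: sumC (fun m => Cpow q (k * S m)) K = sumC (fun m => Cpow (Cpow q k) (S m)) K).
  { apply sumC_ext. intros. apply Cpow_mul. }
  rewrite E. pose proof (geomC (Cpow q k) K) as G.
  set (S0 := sumC (fun m => Cpow (Cpow q k) (S m)) K) in *.
  set (p := Cpow q k) in *. set (pK := Cpow p (S K)) in *.
  assert (S0 = Cmult (Cminus p pK) (Cinv (Cminus (RtoC 1) p))).
  { rewrite <- G. field. auto. }
  rewrite H. field. auto.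
Qed.

Lemma TR_some_cf K k : (1 <= k)%nat ->
  TR r (Some K) k = tr r k - (r ^ k) ^ (S K) / (1 - r ^ k).
Proof.
  intros Hk. pose proof (rk_lt1 k Hk) as Hrk. unfold TR, tr.
  rewrite (sumR_ext _ (fun m => (r ^ k) ^ (S m))) by (intros; apply pow_mult).
  pose proof (geomR (r ^ k) K) as G.
  set (p := r ^ k) in *. set (pK := p ^ S K) in *. set (S0 := sumR (fun m => p ^ S m) K) in *.
  assert (S0 = (p - pK) / (1 - p)). { rewrite <- G. field. lra. }
  rewrite H. field. lra.
Qed.

Lemma Cmod_tq k : (1 <= k)%nat -> Cmod (tq q k) <= tr r k.
Proof.
  intros Hk. pose proof (rk_lt1 k Hk) as Hrk. pose proof (Cmod_1m (Cpow q k)) as H1.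
  rewrite Cmod_pow, <- Hr in H1.
  assert (Hp : Cminus (RtoC 1) (Cpow q k) <> RtoC 0).
  { intros E. rewrite E, Cmod_0 in H1. lra. }
  replace (tq q k) with (Cmult (Cpow q k) (Cinv (Cminus (RtoC 1) (Cpow q k)))).
  2:{ unfold tq, xq. set (p := Cpow q k) in *. field. auto. }
  rewrite Cmod_mult, Cmod_inv, Cmod_pow, <- Hr by auto. unfold tr, Rdiv.
  apply Rmult_le_compat_l. lra. apply Rinv_le_contravar; lra.
Qed.

Lemma Dom_T Ko Ko' k : (1 <= k)%nat -> ole Ko Ko' ->
  Dom (TC q Ko k) (TC q Ko' k) (TR r Ko k) (TR r Ko' k).
Proof.
  intros Hk Ho. pose proof (rk_lt1 k Hk) as Hrk.
  assert (Hterm : forall m, Cmod (Cpow q (k * S m)) <= r ^ (k * S m)).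
  { intros. rewrite Cmod_pow, Hr. lra. }
  assert (HS : forall K, Cmod (TC q (Some K) k) <= TR r (Some K) k).
  { intros. simpl. eapply Rle_trans. apply Cmod_sumC. apply sumR_le. intros; auto. }
  destruct Ko as [K|], Ko' as [K'|]; simpl in Ho; try contradiction.
  - apply Dom_sum_ext; auto. intros. apply Dom_refl. auto.
  - split; [|split]. 
    + rewrite TC_some_cf, TR_some_cf by auto.
      replace (Cminus (TC q None k) (Cminus (tq q k) (Cmult (Cpow (Cpow q k) (S K)) (Cinv (Cminus (RtoC 1) (Cpow q k))))))
        with (Cmult (Cpow (Cpow q k) (S K)) (Cinv (Cminus (RtoC 1) (Cpow q k)))) by (simpl; ring).
      simpl TR. 
      pose proof (Cmod_1m (Cpow q k)) as H1. rewrite Cmod_pow, <- Hr in H1.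
      assert (Hp : Cminus (RtoC 1) (Cpow q k) <> RtoC 0). { intros E. rewrite E, Cmod_0 in H1. lra. }
      rewrite Cmod_mult, Cmod_inv, !Cmod_pow, <- Hr by auto.
      replace (tr r k - (tr r k - (r ^ k) ^ S K / (1 - r ^ k))) with ((r ^ k) ^ S K * / (1 - r ^ k)) by (unfold Rdiv; ring).
      apply Rmult_le_compat_l. apply pow_le; lra. apply Rinv_le_contravar; lra.
    + apply HS.
    + rewrite TR_some_cf by auto. simpl TR.
      assert (0 <= (r ^ k) ^ S K / (1 - r ^ k)). { apply Rle_mult_inv_pos. apply pow_le; lra. lra. }
      lra.
  - apply Dom_refl. apply Cmod_tq. auto.
Qed.

Lemma TR_nonneg Ko k : (1 <= k)%nat -> 0 <= TR r Ko k.
Proof. intros Hk. assert (ole Ko Ko) by (destruct Ko; simpl; auto).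
  exact (Dom_nonneg _ _ _ _ (Dom_T Ko Ko k Hk H)). Qed.

End WithQ.

Open Scope R_scope.

Lemma ole_refl o : ole o o.
Proof. destruct o; simpl; auto. Qed.
Lemma dok_mono Do Do' d : ole Do Do' -> dok Do d = true -> dok Do' d = true.
Proof. destruct Do, Do'; simpl; auto; intros H1 H2; try contradiction.
  apply Nat.ltb_lt in H2. apply Nat.ltb_lt. lia. Qed.

Section WithQ.
Variable q : C.
Variable r : R.
Hypothesis Hr : r = Cmod q.
Hypothesis Hr1 : r < 1.

Lemma Dom_FT w : okb w = true -> forall Ko Ko' Do Do' k, ole Ko Ko' -> ole Do Do' ->
  Dom (FT q Ko Do w k) (FT q Ko' Do' w k) (FTr r Ko Do w k) (FTr r Ko' Do' w k).
Proof.
  induction w as [|x w IH]; intros Hok Ko Ko' Do Do' k HK HD.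
  - simpl. apply Dom_refl. destruct (k =? 0)%nat. rewrite Cmod_1; lra. rewrite Cmod_0; lra.
  - pose proof (okb_tail _ _ Hok) as Hw.
    destruct x.
    + destruct k as [|k].
      * assert (HB : In LB w) by (apply (okb_cons_nonB LP); auto; discriminate).
        simpl. rewrite !FT_zero, !FTr_zero by auto. rewrite !Rmult_0_r.
        replace (Cmult (Cplus (RtoC 1) (TC q Ko 0)) (RtoC 0)) with (RtoC 0) by ring.
        replace (Cmult (Cplus (RtoC 1) (TC q Ko' 0)) (RtoC 0)) with (RtoC 0) by ring. apply Dom_zero.
      * simpl. apply Dom_mul; [|apply IH; auto]. apply Dom_add. apply Dom_refl. rewrite Cmod_1; lra.
        apply Dom_T; auto. lia.
    + destruct k as [|k].
      * assert (HB : In LB w) by (apply (okb_cons_nonB LA); auto; discriminate).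
        simpl. rewrite !FT_zero, !FTr_zero by auto. rewrite !Rmult_0_r.
        replace (Cmult (TC q Ko 0) (RtoC 0)) with (RtoC 0) by ring.
        replace (Cmult (TC q Ko' 0) (RtoC 0)) with (RtoC 0) by ring. apply Dom_zero.
      * simpl. apply Dom_mul; [|apply IH; auto]. apply Dom_T; auto. lia.
    + simpl. apply Dom_sum. intros d Hd.
      destruct (dok Do d) eqn:E1.
      * rewrite (dok_mono Do Do' d HD E1). apply IH; auto.
      * destruct (dok Do' d). apply Dom_ext0. eapply Dom_right. apply (IH Hw Ko' Ko' Do' Do'); apply ole_refl.
        apply Dom_zero.
Qed.

Lemma FTr_nonneg w Ko Do k : okb w = true -> 0 <= FTr r Ko Do w k.
Proof. intros H. exact (Dom_nonneg _ _ _ _ (Dom_FT w H Ko Ko Do Do k (ole_refl _) (ole_refl _))). Qed.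

End WithQ.

Lemma FT_D q Ko w : forall k D, (k <= D)%nat -> FT q Ko (Some D) w k = FT q Ko None w k.
Proof.
  induction w as [|x w IH]; intros k D Hk; simpl; auto.
  destruct x; try (rewrite IH by auto; auto).
  apply sumC_ext. intros d Hd. simpl. replace (d <? D)%nat with true by (symmetry; apply Nat.ltb_lt; lia).
  apply IH. lia.
Qed.
Lemma FTr_D r Ko w : forall k D, (k <= D)%nat -> FTr r Ko (Some D) w k = FTr r Ko None w k.
Proof.
  induction w as [|x w IH]; intros k D Hk; simpl; auto.
  destruct x; try (rewrite IH by auto; auto).
  apply sumR_ext. intros d Hd. simpl. replace (d <? D)%nat with true by (symmetry; apply Nat.ltb_lt; lia).
  apply IH. lia.
Qed.

Lemma FT_P q Ko Do u v k : FT q Ko Do (u ++ LP :: v) k = Cplus (FT q Ko Do (u ++ v) k) (FT q Ko Do (u ++ LA :: v) k).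
Proof.
  revert k. induction u as [|x u IH]; intros k; simpl. ring.
  destruct x; try (rewrite IH; ring).
  rewrite <- sumC_plus. apply sumC_ext. intros. destruct (dok Do i). apply IH. ring.
Qed.

Open Scope R_scope.

Fixpoint J (q : C) K (w : list lt3) (A0 B0 : nat) : C :=
  match w with
  | [] => RtoC 1
  | LP :: w' => J q K w' A0 B0
  | LA :: w' => sumC (fun m => Cmult (Cpow q (B0 * S m)) (J q K w' (A0 + S m) B0)) K
  | LB :: w' => sumC (fun d => Cmult (Cpow q (A0 * S d)) (J q K w' A0 B0)) K
  end.
Fixpoint Jr (r : R) K (w : list lt3) (A0 B0 : nat) : R :=
  match w with
  | [] => 1
  | LP :: w' => Jr r K w' A0 B0
  | LA :: w' => sumR (fun m => r ^ (B0 * S m) * Jr r K w' (A0 + S m) B0) K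
  | LB :: w' => sumR (fun d => r ^ (A0 * S d) * Jr r K w' A0 B0) K
  end.

Lemma sumC_mult_r f n c : Cmult (sumC f n) c = sumC (fun i => Cmult (f i) c) n.
Proof. induction n; simpl. ring. rewrite <- IHn. ring. Qed.

Lemma pow2_eq (q : C) a b c e X : (a + b = c + e)%nat ->
  Cmult (Cpow q a) (Cmult (Cpow q b) X) = Cmult (Cpow q c) (Cmult (Cpow q e) X).
Proof. intros H. rewrite !Cmult_assoc, <- !Cpow_add_r, H. auto. Qed.

Lemma J_rB q K w : forall A0 B0, J q K (w ++ [LB]) A0 B0 =
  sumC (fun d => Cmult (Cpow q (A0 * S d)) (J q K w A0 (B0 + S d))) K.
Proof.
  induction w as [|x w IH]; intros A0 B0; simpl; auto.
  destruct x; auto.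
  - etransitivity. apply sumC_ext. intros m _. rewrite IH. rewrite <- sumC_scal. reflexivity.
    rewrite sumC_exch. apply sumC_ext. intros d _. rewrite <- sumC_scal. apply sumC_ext. intros m _.
    apply pow2_eq. nia.
  - etransitivity. apply sumC_ext. intros m _. rewrite IH. rewrite <- sumC_scal. reflexivity.
    rewrite sumC_exch. apply sumC_ext. intros d _. rewrite <- sumC_scal. apply sumC_ext. intros m _.
    apply pow2_eq. nia.
Qed.

Lemma J_rA q K w : forall A0 B0, J q K (w ++ [LA]) A0 B0 =
  sumC (fun m => Cmult (Cpow q (B0 * S m)) (J q K w A0 B0)) K.
Proof.
  induction w as [|x w IH]; intros A0 B0; simpl; auto.
  destruct x; auto.
  - etransitivity. apply sumC_ext. intros m _. rewrite IH. rewrite <- sumC_scal. reflexivity.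
    rewrite sumC_exch. apply sumC_ext. intros d _. rewrite <- sumC_scal. apply sumC_ext. intros m _.
    apply pow2_eq. nia.
  - etransitivity. apply sumC_ext. intros m _. rewrite IH. rewrite <- sumC_scal. reflexivity.
    rewrite sumC_exch. apply sumC_ext. intros d _. rewrite <- sumC_scal. apply sumC_ext. intros m _.
    apply pow2_eq. nia.
Qed.

Lemma J_rP q K w : forall A0 B0, J q K (w ++ [LP]) A0 B0 = J q K w A0 B0.
Proof.
  induction w as [|x w IH]; intros A0 B0; simpl; auto.
  destruct x; auto; apply sumC_ext; intros; rewrite IH; auto.
Qed.

Definition swap (x : lt3) := match x with LA => LB | LB => LA | LP => LP end.
Definition tau (w : list lt3) := rev (map swap w).

Lemma J_dual q K w : forall A0 B0, J q K (tau w) A0 B0 = J q K w B0 A0.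
Proof.
  induction w as [|x w IH]; intros A0 B0; auto.
  unfold tau. simpl. fold (tau w). destruct x; simpl.
  - rewrite J_rP. auto.
  - rewrite J_rB. apply sumC_ext. intros. rewrite IH. auto.
  - rewrite J_rA. apply sumC_ext. intros. rewrite IH. auto.
Qed.

Lemma J_hom r K w : forall A0 B0, J (RtoC r) K w A0 B0 = RtoC (Jr r K w A0 B0).
Proof.
  induction w as [|x w IH]; intros A0 B0; simpl; auto.
  destruct x; auto; rewrite RtoC_sumR; apply sumC_ext; intros; rewrite IH, RtoC_mult, RtoC_pow; auto.
Qed.
Lemma FT_hom r K Do w : forall k, FT (RtoC r) (Some K) Do w k = RtoC (FTr r (Some K) Do w k).
Proof.
  induction w as [|x w IH]; intros k; simpl.
  - destruct (k =? 0)%nat; auto.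
  - assert (HT : sumC (fun m => Cpow (RtoC r) (k * S m)) K = RtoC (sumR (fun m => r ^ (k * S m)) K)).
    { rewrite RtoC_sumR. apply sumC_ext. intros. rewrite RtoC_pow. auto. }
    destruct x.
    + rewrite IH, HT, RtoC_mult, RtoC_plus. auto.
    + rewrite IH, HT, RtoC_mult. auto.
    + rewrite RtoC_sumR. apply sumC_ext. intros. destruct (dok Do i); auto.
Qed.
Lemma RtoC_inj' a b : RtoC a = RtoC b -> a = b.
Proof. intros H. apply (f_equal fst) in H. simpl in H. auto. Qed.

Lemma Jr_rB r K w A0 B0 : Jr r K (w ++ [LB]) A0 B0 =
  sumR (fun d => r ^ (A0 * S d) * Jr r K w A0 (B0 + S d)) K.
Proof. apply RtoC_inj'. rewrite <- J_hom, J_rB, RtoC_sumR. apply sumC_ext. intros.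
  rewrite J_hom, RtoC_mult, RtoC_pow. auto. Qed.

Fixpoint nB (w : list lt3) : nat := match w with [] => O | LB :: w' => S (nB w') | _ :: w' => nB w' end.
Fixpoint noP (w : list lt3) : bool := match w with [] => true | LP :: _ => false | _ :: w' => noP w' end.

Lemma bridge q K w : noP w = true -> forall A0 Big, (1 + K * nB w <= Big)%nat ->
  J q K w A0 0 = sumC (fun k => Cmult (Cpow q (A0 * k)) (FT q (Some K) (Some K) w k)) Big.
Proof.
  induction w as [|x w IH]; intros HP A0 Big HB; simpl.
  - destruct Big as [|Big]. simpl in HB; lia. rewrite sumC_S_l. simpl.
    rewrite (sumC_ext _ (fun _ => RtoC 0)) by (intros; cring). rewrite sumC_zero, Nat.mul_0_r. simpl. ring.
  - destruct x; simpl in HP; try discriminate.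
    + etransitivity. apply sumC_ext. intros m _. rewrite (IH HP (A0 + S m)%nat Big) by (simpl in HB; lia).
      rewrite Cmult_1_l. reflexivity.
      rewrite sumC_exch. apply sumC_ext. intros k _. simpl TC.
      rewrite sumC_mult_r, <- sumC_scal. apply sumC_ext. intros m _.
      rewrite !Cmult_assoc, <- Cpow_add_r. f_equal. f_equal. nia.
    + set (g := fun d j => Cmult (Cpow q (A0 * (j + S d))%nat) (FT q (Some K) (Some K) w j)).
      transitivity (sumC (fun k => sumC (fun d => if (d <? K)%nat then g d (k - 1 - d)%nat else RtoC 0) k) Big).
      * rewrite (sumC_tri g). unfold g. apply sumC_ext. intros d Hd.
        rewrite (IH HP A0 (Big - 1 - d)%nat) by (simpl in HB; nia).
        rewrite <- sumC_scal. apply sumC_ext. intros j _. rewrite Cmult_assoc, <- Cpow_add_r.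
        f_equal. f_equal. nia.
      * apply sumC_ext. intros k _. rewrite <- sumC_scal. apply sumC_ext. intros d Hd.
        unfold g. destruct (d <? K)%nat. replace (k - 1 - d + S d)%nat with k by lia. auto. ring.
Qed.

Lemma bridge_r r K w : noP w = true -> forall Big, (1 + K * nB w <= Big)%nat ->
  Jr r K w 0 0 = sumR (fun k => FTr r (Some K) (Some K) w k) Big.
Proof.
  intros HP Big HB. apply RtoC_inj'. rewrite <- J_hom, (bridge _ K w HP 0 Big HB), RtoC_sumR.
  apply sumC_ext. intros. simpl. rewrite FT_hom. ring.
Qed.

Open Scope R_scope.

Lemma pow_decr r a b : 0 <= r <= 1 -> (a <= b)%nat -> r ^ b <= r ^ a.
Proof.
  intros Hr Hab. induction b. replace a with O by lia. lra.
  destruct (Nat.eq_dec a (S b)). subst. lra.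
  simpl. assert (r ^ b <= r ^ a) by (apply IHb; lia).
  assert (0 <= r ^ b) by (apply pow_le; lra). nra.
Qed.

Section Bound.
Variable r : R.
Hypothesis Hr0 : 0 <= r.
Hypothesis Hr1 : r < 1.
Let G := / (1 - r).

Lemma G_ge1 : 1 <= G.
Proof. unfold G. rewrite <- Rinv_1. apply Rinv_le_contravar; lra. Qed.

Lemma geo_le K : sumR (fun m => r ^ m) K <= G.
Proof.
  assert (E : (1 - r) * sumR (fun m => r ^ m) K = 1 - r ^ K).
  { induction K. simpl. ring. change (sumR (fun m => r ^ m) (S K)) with (sumR (fun m => r ^ m) K + r ^ K).
    rewrite Rmult_plus_distr_l, IHK. simpl. ring. }
  assert (0 <= r ^ K) by (apply pow_le; lra).
  unfold G. apply Rmult_le_reg_l with (1 - r). lra. rewrite E, Rinv_r by lra. lra.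
Qed.

Lemma geo_le' K c : (1 <= c)%nat -> sumR (fun m => r ^ (c * S m)) K <= G.
Proof. intros Hc. eapply Rle_trans; [|apply (geo_le K)]. apply sumR_le. intros. apply pow_decr. lra. nia. Qed.

Lemma Jr_nonneg K w : forall A0 B0, 0 <= Jr r K w A0 B0.
Proof. induction w as [|x w IH]; intros; simpl. lra. destruct x; auto; apply sumR_nonneg; intros;
  apply Rmult_le_pos; auto; apply pow_le; lra. Qed.

Lemma Jr_bound K w : forall A0 B0, (1 <= A0)%nat -> (1 <= B0)%nat -> Jr r K w A0 B0 <= G ^ (length w).
Proof.
  pose proof G_ge1 as HG.
  induction w as [|x w IH]; intros A0 B0 HA HB; simpl. lra.
  assert (0 <= G ^ length w) by (apply pow_le; lra).
  destruct x.
  - eapply Rle_trans. apply IH; auto. rewrite <- (Rmult_1_l (G ^ length w)) at 1. apply Rmult_le_compat_r; lra.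
  - apply Rle_trans with (sumR (fun m => r ^ (B0 * S m) * G ^ length w) K).
    apply sumR_le. intros. apply Rmult_le_compat_l. apply pow_le; lra. apply IH; lia.
    rewrite (sumR_ext _ (fun m => G ^ length w * r ^ (B0 * S m))) by (intros; ring). rewrite sumR_scal.
    rewrite Rmult_comm. apply Rmult_le_compat_r; auto. apply geo_le'; auto.
  - apply Rle_trans with (sumR (fun m => r ^ (A0 * S m) * G ^ length w) K).
    apply sumR_le. intros. apply Rmult_le_compat_l. apply pow_le; lra. apply IH; lia.
    rewrite (sumR_ext _ (fun m => G ^ length w * r ^ (A0 * S m))) by (intros; ring). rewrite sumR_scal.
    rewrite Rmult_comm. apply Rmult_le_compat_r; auto. apply geo_le'; auto.
Qed.

Lemma sumR_mult_r f n c : sumR f n * c = sumR (fun i => f i * c) n.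
Proof. induction n; simpl. ring. rewrite <- IHn. ring. Qed.

Lemma Jr_main_bound K u : Jr r K (LA :: u ++ [LB]) 0 0 <= G ^ (length u + 2).
Proof.
  pose proof G_ge1 as HG.
  assert (HX : 0 <= G ^ length u) by (apply pow_le; lra).
  assert (HS : 0 <= sumR (fun d => r ^ d) K) by (apply sumR_nonneg; intros; apply pow_le; lra).
  apply Rle_trans with (sumR (fun m => r ^ m * (sumR (fun d => r ^ d) K * G ^ length u)) K).
  - simpl Jr. apply sumR_le. intros m _. rewrite Rmult_1_l.
    rewrite Jr_rB.
    rewrite sumR_mult_r, <- sumR_scal. apply sumR_le. intros d _.
    replace (0 + S d)%nat with (S d) by lia.
    assert (0 <= r ^ (S m * S d)) by (apply pow_le; lra).
    assert (r ^ (S m * S d) <= r ^ m * r ^ d) by (rewrite <- pow_add; apply pow_decr; [lra|nia]).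
    assert (Jr r K u (S m) (S d) <= G ^ length u) by (apply Jr_bound; lia).
    assert (0 <= Jr r K u (S m) (S d)) by apply Jr_nonneg.
    apply Rle_trans with (r ^ (S m * S d) * G ^ length u). apply Rmult_le_compat_l; lra.
    replace (r ^ m * (r ^ d * G ^ length u)) with ((r ^ m * r ^ d) * G ^ length u) by ring.
    apply Rmult_le_compat_r; lra.
  - rewrite (sumR_ext _ (fun m => (sumR (fun d => r ^ d) K * G ^ length u) * r ^ m)) by (intros; ring).
    rewrite sumR_scal. replace (length u + 2)%nat with (length u + 1 + 1)%nat by lia. rewrite !pow_add, pow_1.
    pose proof (geo_le K).
    assert (sumR (fun d => r ^ d) K * G ^ length u <= G ^ length u * G) by (rewrite Rmult_comm; apply Rmult_le_compat_l; lra).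
    apply Rle_trans with ((G ^ length u * G) * sumR (fun m => r ^ m) K).
    apply Rmult_le_compat_r; auto. apply Rmult_le_compat_l; auto. apply Rmult_le_pos; lra.
Qed.
End Bound.

Open Scope R_scope.

Lemma is_lim_seq_sumR (f : nat -> nat -> R) (l : nat -> R) n :
  (forall i, (i < n)%nat -> is_lim_seq (fun K => f K i) (l i)) ->
  is_lim_seq (fun K => sumR (f K) n) (sumR l n).
Proof.
  induction n; intros H; simpl. apply is_lim_seq_const.
  apply (is_lim_seq_plus' _ _ (sumR l n) (l n)). apply IHn; intros; apply H; lia. apply H; lia.
Qed.

Lemma lim_TR r k : 0 <= r -> r < 1 -> (1 <= k)%nat -> is_lim_seq (fun K => TR r (Some K) k) (tr r k).
Proof.
  intros H0 H1 Hk.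
  assert (Hr : r = Cmod (RtoC r)) by (rewrite Cmod_R, Rabs_pos_eq; auto).
  apply is_lim_seq_ext with (fun K => tr r k - (r ^ k) ^ (S K) / (1 - r ^ k)).
  { intros K. symmetry. apply (TR_some_cf (RtoC r) r Hr H1 K k Hk). }
  assert (L : is_lim_seq (fun K => tr r k - (r ^ k) ^ (S K) / (1 - r ^ k)) (tr r k - 0 * / (1 - r ^ k))).
  { apply is_lim_seq_minus'. apply is_lim_seq_const.
    unfold Rdiv. apply (is_lim_seq_mult' _ _ 0 (/ (1 - r ^ k))); [|apply is_lim_seq_const].
    apply (is_lim_seq_incr_1 (fun n => (r ^ k) ^ n) 0). apply is_lim_seq_geom.
    pose proof (pow_lt_1_compat r k (conj H0 H1) ltac:(lia)). rewrite Rabs_pos_eq; lra. }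
  replace (tr r k - 0 * / (1 - r ^ k)) with (tr r k) in L by ring. exact L.
Qed.

Lemma lim_FTr_K r w : 0 <= r -> r < 1 -> okb w = true -> forall k,
  is_lim_seq (fun K => FTr r (Some K) None w k) (FTr r None None w k).
Proof.
  intros H0 H1. induction w as [|x w IH]; intros Hok k; simpl.
  - apply is_lim_seq_const.
  - pose proof (okb_tail _ _ Hok) as Hw. destruct x.
    + destruct k as [|k].
      * assert (HB : In LB w) by (apply (okb_cons_nonB LP); auto; discriminate).
        rewrite FTr_zero by auto. apply is_lim_seq_ext with (fun _ => 0). intros. rewrite FTr_zero by auto. ring.
        replace (_ * 0) with 0 by ring. apply is_lim_seq_const.
      * apply is_lim_seq_mult'; auto. apply is_lim_seq_plus'. apply is_lim_seq_const. apply lim_TR; auto. lia.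
    + destruct k as [|k].
      * assert (HB : In LB w) by (apply (okb_cons_nonB LA); auto; discriminate).
        rewrite FTr_zero by auto. apply is_lim_seq_ext with (fun _ => 0). intros. rewrite FTr_zero by auto. ring.
        replace (_ * 0) with 0 by ring. apply is_lim_seq_const.
      * apply is_lim_seq_mult'; auto. apply lim_TR; auto. lia.
    + apply (is_lim_seq_sumR (fun K d => if dok None d then FTr r (Some K) None w (k - 1 - d) else 0)).
      intros i _. simpl. auto.
Qed.

Lemma okb_snoc x u : okb (x :: u ++ [LB]) = true.
Proof. revert x. induction u as [|y u IH]; intros x. destruct x; reflexivity. destruct x; apply (IH y). Qed.
Lemma nB_snoc x u : (1 <= nB (x :: u ++ [LB]))%nat.
Proof. revert x. induction u as [|y u IH]; intros x; simpl. destruct x; simpl; lia. specialize (IH y). destruct x; simpl in *; lia. Qed.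
Lemma noP_app u v : noP (u ++ v) = true <-> noP u = true /\ noP v = true.
Proof. induction u as [|x u IH]; simpl. tauto. destruct x; auto. split; intros H; [discriminate | destruct H; discriminate]. Qed.

Lemma filterlim_ge (phi : nat -> nat) : (forall n, (n <= phi n)%nat) -> filterlim phi eventually eventually.
Proof. intros H P [N HN]. exists N. intros n Hn. apply HN. specialize (H n). lia. Qed.

Section Core.
Variable q : C.
Variable r : R.
Hypothesis Hr : r = Cmod q.
Hypothesis Hr1 : r < 1.
Variable u : list lt3.
Hypothesis HPu : noP u = true.
Let w := LA :: u ++ [LB].

Lemma r0 : 0 <= r.
Proof. rewrite Hr. apply Cmod_ge_0. Qed.
Lemma HPw : noP w = true.
Proof. unfold w. simpl. apply noP_app. auto. Qed.
Lemma Hok : okb w = true.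
Proof. apply okb_snoc. Qed.

Definition av N := sumC (fun k => FT q None None w k) N.
Definition Ac N := sumR (fun k => FTr r None None w k) N.
Definition hv K := J q K w 0 0.
Definition Hv K := Jr r K w 0 0.
Definition bnd K := (1 + K * nB w)%nat.

Lemma bnd_ge K : (K <= bnd K)%nat.
Proof. unfold bnd, w. pose proof (nB_snoc LA u). nia. Qed.

Lemma Dom_a N N' : (N <= N')%nat -> Dom (av N) (av N') (Ac N) (Ac N').
Proof.
  intros H. apply Dom_sum_ext; auto.
  - intros. apply Dom_FT; auto using Hok, ole_refl.
  - intros. eapply Dom_right. apply (Dom_FT q r Hr Hr1 w Hok None None None None i); apply ole_refl.
Qed.

Lemma hv_eq K : hv K = sumC (fun k => FT q (Some K) (Some K) w k) (bnd K).
Proof. unfold hv. rewrite (bridge q K w HPw 0 (bnd K)) by (unfold bnd; lia).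
  apply sumC_ext. intros. rewrite Nat.mul_0_l. simpl. ring. Qed.
Lemma Hv_eq K : Hv K = sumR (fun k => FTr r (Some K) (Some K) w k) (bnd K).
Proof. unfold Hv. apply bridge_r. apply HPw. unfold bnd; lia. Qed.

Lemma Dom_h K : Dom (hv K) (av (bnd K)) (Hv K) (Ac (bnd K)).
Proof. rewrite hv_eq, Hv_eq. apply Dom_sum. intros. apply Dom_FT; simpl; auto using Hok. Qed.

Lemma Hv_mono K : Hv K <= Hv (S K).
Proof. rewrite !Hv_eq.
  assert (D : Dom (sumC (fun k => FT q (Some K) (Some K) w k) (bnd K)) (sumC (fun k => FT q (Some (S K)) (Some (S K)) w k) (bnd (S K)))
     (sumR (fun k => FTr r (Some K) (Some K) w k) (bnd K)) (sumR (fun k => FTr r (Some (S K)) (Some (S K)) w k) (bnd (S K)))).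
  { apply Dom_sum_ext. unfold bnd; nia.
    - intros. apply Dom_FT; simpl; auto using Hok.
    - intros. eapply Dom_right. apply (Dom_FT q r Hr Hr1 w Hok (Some (S K)) (Some (S K)) (Some (S K)) (Some (S K)) i); apply ole_refl. }
  destruct D as [_ [_ D]]. auto.
Qed.

Lemma Hv_bound K : Hv K <= (/ (1 - r)) ^ (length u + 2).
Proof. unfold Hv, w. apply Jr_main_bound. apply r0. auto. Qed.

Lemma Hv_lim : ex_finite_lim_seq Hv.
Proof. apply (ex_finite_lim_seq_incr _ ((/ (1 - r)) ^ (length u + 2))).
  apply Hv_mono. apply Hv_bound. Qed.

Let LH := real (Lim_seq Hv).
Lemma Hv_lim' : is_lim_seq Hv LH.
Proof. destruct Hv_lim as [l Hl]. unfold LH. rewrite (is_lim_seq_unique _ _ Hl). simpl. auto. Qed.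
Lemma Hv_le K : Hv K <= LH.
Proof. apply (is_lim_seq_incr_compare Hv LH Hv_lim' Hv_mono). Qed.

Lemma Ac_le N : Ac N <= LH.
Proof.
  assert (L : is_lim_seq (fun K => sumR (fun k => FTr r (Some K) None w k) N) (Ac N)).
  { apply (is_lim_seq_sumR (fun K k => FTr r (Some K) None w k)). intros. apply lim_FTr_K; auto using r0, Hok. }
  assert (Rbar_le (Ac N) LH).
  { apply (is_lim_seq_le_loc (fun K => sumR (fun k => FTr r (Some K) None w k) N) (fun _ => LH) (Ac N) LH); auto; [|apply is_lim_seq_const].
    exists N. intros K HK. eapply Rle_trans; [|apply (Hv_le K)]. rewrite Hv_eq.
    rewrite (sumR_ext _ (fun k => FTr r (Some K) (Some K) w k)).
    2:{ intros. symmetry. apply FTr_D. lia. }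
    apply sumR_mono. pose proof (bnd_ge K). lia. intros. apply FTr_nonneg with q; auto using Hok. }
  simpl in H. auto.
Qed.

Lemma Ac_mono N : Ac N <= Ac (S N).
Proof. destruct (Dom_a N (S N)) as [_ [_ H]]; auto. Qed.

Lemma Ac_lim : is_lim_seq Ac LH.
Proof.
  assert (E : ex_finite_lim_seq Ac) by (apply (ex_finite_lim_seq_incr _ LH); auto using Ac_mono, Ac_le).
  destruct E as [l Hl].
  assert (l <= LH). { assert (Rbar_le l LH) by (apply (is_lim_seq_le Ac (fun _ => LH) l LH); auto using Ac_le, is_lim_seq_const). auto. }
  assert (LH <= l).
  { assert (Rbar_le LH l).
    { apply (is_lim_seq_le Hv (fun K => Ac (bnd K))); auto using Hv_lim'.
      intros K. destruct (Dom_h K) as [_ [_ D]]. auto.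
      apply is_lim_seq_subseq; auto. apply filterlim_ge. apply bnd_ge. }
    auto. }
  replace LH with l by lra. auto.
Qed.

Section Proj.
Variable pr : C -> R.
Hypothesis Hpr1 : forall z, Rabs (pr z) <= Cmod z.
Hypothesis Hpr2 : forall a b, pr (Cminus a b) = pr a - pr b.

Lemma pr_a_conv : ex_finite_lim_seq (fun N => pr (av N)).
Proof.
  apply ex_lim_seq_cauchy_corr. intros eps.
  assert (Hc : ex_lim_seq_cauchy Ac) by (apply ex_lim_seq_cauchy_corr; exists LH; apply Ac_lim).
  destruct (Hc eps) as [N HN]. exists N. intros n m Hn Hm.
  rewrite <- Hpr2. eapply Rle_lt_trans. apply Hpr1.
  destruct (le_lt_dec m n) as [H|H].
  - destruct (Dom_a m n H) as [D _]. specialize (HN n m Hn Hm). rewrite Rabs_pos_eq in HN.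
    lra. destruct (Dom_a m n H) as [_ [_ D2]]. lra.
  - assert (m >= n)%nat by lia. destruct (Dom_a n m ltac:(lia)) as [D [_ D2]].
    specialize (HN n m Hn Hm). rewrite Rabs_left1 in HN by lra.
    replace (Cminus (av n) (av m)) with (Copp (Cminus (av m) (av n))) by ring. rewrite Cmod_opp. lra.
Qed.

Lemma pr_lim_eq : Lim_seq (fun K => pr (hv K)) = Lim_seq (fun N => pr (av N)).
Proof.
  destruct pr_a_conv as [l Hl].
  rewrite (is_lim_seq_unique _ _ Hl).
  apply is_lim_seq_unique.
  apply is_lim_seq_ext with (fun K => pr (av (bnd K)) + (pr (hv K) - pr (av (bnd K)))). intros; ring.
  replace (Finite l) with (Finite (l + 0)) by (f_equal; ring).
  apply is_lim_seq_plus'. apply (is_lim_seq_subseq (fun N => pr (av N))); auto. apply filterlim_ge, bnd_ge.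
  assert (Z : is_lim_seq (fun K => Ac (bnd K) - Hv K) 0).
  { replace 0 with (LH - LH) by ring. apply is_lim_seq_minus'. apply (is_lim_seq_subseq Ac); auto using Ac_lim.
    apply filterlim_ge, bnd_ge. apply Hv_lim'. }
  apply is_lim_seq_le_le with (fun K => - (Ac (bnd K) - Hv K)) (fun K => Ac (bnd K) - Hv K); auto.
  - intros K. rewrite <- Hpr2. destruct (Dom_h K) as [D _]. pose proof (Hpr1 (Cminus (hv K) (av (bnd K)))).
    assert (E : Cmod (Cminus (hv K) (av (bnd K))) = Cmod (Cminus (av (bnd K)) (hv K))).
    { replace (Cminus (hv K) (av (bnd K))) with (Copp (Cminus (av (bnd K)) (hv K))) by ring. apply Cmod_opp. }
    rewrite E in H. apply Rabs_le_between in H. lra.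
  - replace (Finite 0) with (Rbar_opp 0) by (simpl; f_equal; ring). apply -> is_lim_seq_opp. auto.
Qed.
End Proj.
End Core.

Open Scope R_scope.

Definition convC (u : nat -> C) := ex_finite_lim_seq (fun N => Re (u N)) /\ ex_finite_lim_seq (fun N => Im (u N)).

Lemma Im_le_Cmod z : Rabs (Im z) <= Cmod z.
Proof.
  destruct z as [x y]. unfold Cmod, Im. simpl. rewrite <- sqrt_Rsqr_abs. apply sqrt_le_1_alt.
  unfold Rsqr. nra.
Qed.

Fixpoint cntP (u : list lt3) : nat := match u with [] => O | LP :: u' => S (cntP u') | _ :: u' => cntP u' end.
Lemma cntP_app u v : cntP (u ++ v) = (cntP u + cntP v)%nat.
Proof. induction u as [|x u IH]; simpl; auto. destruct x; simpl; lia. Qed.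
Lemma split_LP u : noP u = false -> exists u1 u2, u = u1 ++ LP :: u2.
Proof. induction u as [|x u IH]; simpl; intros H. discriminate. destruct x.
  exists [], u. auto. destruct (IH H) as [u1 [u2 E]]. exists (LA :: u1), u2. rewrite E; auto.
  destruct (IH H) as [u1 [u2 E]]. exists (LB :: u1), u2. rewrite E; auto. Qed.

Lemma ex_finite_plus (f g : nat -> R) : ex_finite_lim_seq f -> ex_finite_lim_seq g -> ex_finite_lim_seq (fun n => f n + g n).
Proof. intros [a Ha] [b Hb]. exists (a + b). apply is_lim_seq_plus'; auto. Qed.

Section Conv.
Variable q : C.
Hypothesis Hq : Cmod q < 1.

Lemma av_P u1 u2 N : av q (u1 ++ LP :: u2) N = Cplus (av q (u1 ++ u2) N) (av q (u1 ++ LA :: u2) N).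
Proof. unfold av. rewrite <- sumC_plus. apply sumC_ext. intros k _.
  rewrite <- !app_assoc. exact (FT_P q None None (LA :: u1) (u2 ++ [LB]) k). Qed.

Lemma av_conv_gen (pr : C -> R) : (forall z, Rabs (pr z) <= Cmod z) -> (forall a b, pr (Cminus a b) = pr a - pr b) ->
  (forall a b, pr (Cplus a b) = pr a + pr b) ->
  forall u, ex_finite_lim_seq (fun N => pr (av q u N)).
Proof.
  intros H1 H2 H3.
  assert (forall n u, (cntP u <= n)%nat -> ex_finite_lim_seq (fun N => pr (av q u N))).
  { induction n; intros u Hu.
    - destruct (noP u) eqn:E. apply (pr_a_conv q (Cmod q) eq_refl Hq u E pr H1 H2).
      destruct (split_LP u E) as [u1 [u2 ->]]. rewrite cntP_app in Hu. simpl in Hu. lia.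
    - destruct (noP u) eqn:E. apply (pr_a_conv q (Cmod q) eq_refl Hq u E pr H1 H2).
      destruct (split_LP u E) as [u1 [u2 ->]]. rewrite cntP_app in Hu. simpl in Hu.
      assert (ex_finite_lim_seq (fun N => pr (av q (u1 ++ u2) N) + pr (av q (u1 ++ LA :: u2) N))) as [l Hl].
      apply ex_finite_plus; apply IHn; rewrite cntP_app; simpl; lia.
      exists l. apply is_lim_seq_ext with (2 := Hl). intros. rewrite av_P. auto. }
  intros u. apply (H (cntP u)). lia.
Qed.

Lemma av_conv u : convC (av q u).
Proof. split; apply av_conv_gen; auto using re_le_Cmod, Im_le_Cmod; intros; unfold Re, Im; simpl; ring. Qed.

Lemma climit_av_hv u : noP u = true -> climit (av q u) = climit (hv q u).
Proof.
  intros HP. unfold climit.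
  rewrite (pr_lim_eq q (Cmod q) eq_refl Hq u HP Re); auto using re_le_Cmod. 
  rewrite (pr_lim_eq q (Cmod q) eq_refl Hq u HP Im); auto using Im_le_Cmod.
Qed.
End Conv.

Open Scope R_scope.

Definition trl (l : letter) := match l with Pi => LP | Yl => LB end.
Definition trw (w : word) := map trl w.
Definition FW q w k := FT q None None (trw w) k.
Definition lsum (E : ncpoly) (f : word -> C) : C :=
  fold_right (fun p acc => Cplus (Cmult (RtoC (Q2R (fst p))) (f (snd p))) acc) (RtoC 0) E.

Lemma lsum_app E1 E2 f : lsum (E1 ++ E2) f = Cplus (lsum E1 f) (lsum E2 f).
Proof. induction E1; simpl. ring. rewrite IHE1. ring. Qed.
Lemma lsum_ext E f g : (forall w, f w = g w) -> lsum E f = lsum E g.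
Proof. intros H. induction E; simpl; auto. rewrite IHE, H. auto. Qed.
Lemma lsum_sumC E (f : word -> nat -> C) n : lsum E (fun w => sumC (f w) n) = sumC (fun k => lsum E (fun w => f w k)) n.
Proof. induction E; simpl. rewrite sumC_zero. auto. rewrite IHE, <- sumC_scal, <- sumC_plus. auto. Qed.
Lemma lsum_plus E f g : lsum E (fun w => Cplus (f w) (g w)) = Cplus (lsum E f) (lsum E g).
Proof. induction E; simpl. ring. rewrite IHE. ring. Qed.
Lemma lsum_scal E c f : lsum E (fun w => Cmult c (f w)) = Cmult c (lsum E f).
Proof. induction E; simpl. ring. rewrite IHE. ring. Qed.

Lemma rep_snoc {T} (x : T) n l : repeat x n ++ x :: l = x :: repeat x n ++ l.
Proof. induction n; simpl; auto. rewrite IHn. auto. Qed.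

Lemma Cpow_nz (z : C) c : z <> RtoC 0 -> Cpow z c <> RtoC 0.
Proof. intros H. induction c; simpl. intros E. apply (f_equal fst) in E. simpl in E. lra.
  apply Cmult_neq_0; auto. Qed.
Lemma Cinv_Cpow z c : z <> RtoC 0 -> Cinv (Cpow z c) = Cpow (Cinv z) c.
Proof. intros H. induction c; simpl.
  - unfold Cinv. simpl. apply injective_projections; simpl; field.
  - rewrite <- IHc. pose proof (Cpow_nz z c H). set (pc := Cpow z c) in *. field. split; auto.
Qed.

Section Parse.
Variable q : C.
Hypothesis Hq : Cmod q < 1.

Lemma z_nz k : (1 <= k)%nat -> Cminus (RtoC 1) (Cpow q k) <> RtoC 0.
Proof. intros Hk E. pose proof (Cmod_1m (Cpow q k)). rewrite E, Cmod_0, Cmod_pow in H.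
  pose proof (pow_lt_1_compat (Cmod q) k (conj (Cmod_ge_0 q) Hq) ltac:(lia)). lra. Qed.

Lemma FW_rep c v k : FW q (repeat Pi c ++ v) k = Cmult (Cpow (xq q k) c) (FW q v k).
Proof. induction c; simpl. ring. unfold FW in *. simpl. rewrite IHc. unfold TC, tq. ring. Qed.
Lemma FW_Yl v k : FW q (Yl :: v) k = sumC (fun i => FW q v i) k.
Proof. unfold FW. simpl. rewrite (sumC_rev (fun i => FT q None None (trw v) i)). auto. Qed.
Lemma FW_nil k : FW q [] k = if (k =? 0)%nat then RtoC 1 else RtoC 0.
Proof. reflexivity. Qed.

Lemma ends_Yl_inv x w : (exists v, x :: w = v ++ [Yl]) -> (w = [] /\ x = Yl) \/ (exists v, w = v ++ [Yl]).
Proof. intros [v E]. destruct v as [|y v]. simpl in E. inversion E. auto.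
  simpl in E. inversion E. right. exists v. auto. Qed.

Lemma inner_ok w : forall cnt, (w = [] /\ cnt = 0%nat) \/ (exists v, w = v ++ [Yl]) ->
  exists s, parse_aux w cnt = Some s /\ forall n, inner q s n = sumC (fun j => FW q (repeat Pi cnt ++ w) j) (S n).
Proof.
  induction w as [|x w IH]; intros cnt H.
  - destruct H as [[_ ->]|[v E]]. 2:{ apply app_cons_not_nil in E. contradiction. }
    exists []. split; auto. intros n. simpl inner. rewrite sumC_S_l. simpl.
    rewrite (sumC_ext _ (fun _ => RtoC 0)) by (intros; reflexivity). rewrite sumC_zero. rewrite FW_nil. simpl. ring.
  - destruct H as [[H _]|H]. discriminate. apply ends_Yl_inv in H.
    destruct x.
    + destruct H as [[_ E]|H]. discriminate.
      destruct (IH (S cnt) (or_intror H)) as [s [Hs1 Hs2]]. exists s. split. simpl. auto.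
      intros n. rewrite Hs2. rewrite rep_snoc. auto.
    + assert (H' : (w = [] /\ 0%nat = 0%nat) \/ (exists v, w = v ++ [Yl])) by (destruct H as [[E _]|E]; auto).
      destruct (IH 0%nat H') as [s [Hs1 Hs2]]. exists (cnt :: s). split. simpl. rewrite Hs1. auto.
      intros n. simpl inner. rewrite sumC_S_l. rewrite FW_rep, FW_Yl. simpl sumC at 2.
      rewrite Cmult_0_r, Cplus_0_l. apply sumC_ext. intros k _. rewrite FW_rep, FW_Yl.
      rewrite Hs2. simpl repeat. simpl app. f_equal. unfold xq. apply Cinv_Cpow. apply z_nz. lia.
Qed.

Lemma zword_ok w : forall cnt, (exists v, w = v ++ [Yl]) ->
  exists a1 s, parse_aux w cnt = Some (a1 :: s) /\ forall N,
    zIII_partial q (S a1 :: s) N = sumC (fun k => FT q None None (LA :: trw (repeat Pi cnt ++ w)) k) (S N).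
Proof.
  induction w as [|x w IH]; intros cnt H.
  - destruct H as [v E]. apply app_cons_not_nil in E. contradiction.
  - apply ends_Yl_inv in H. destruct x.
    + destruct H as [[_ E]|H]. discriminate.
      destruct (IH (S cnt) H) as [a1 [s [Hs1 Hs2]]]. exists a1, s. split. simpl. auto.
      intros N. rewrite Hs2. rewrite rep_snoc. auto.
    + assert (H' : (w = [] /\ 0%nat = 0%nat) \/ (exists v, w = v ++ [Yl])) by (destruct H as [[E _]|E]; auto).
      destruct (inner_ok w 0%nat H') as [s [Hs1 Hs2]]. exists cnt, s. split. simpl. rewrite Hs1. auto.
      intros N. unfold zIII_partial. rewrite sumC_S_l.
      assert (Z : FT q None None (LA :: trw (repeat Pi cnt ++ Yl :: w)) 0 = RtoC 0).
      { apply FT_zero. simpl. right. unfold trw. rewrite map_app. apply in_or_app. right. simpl. auto. }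
      rewrite Z, Cplus_0_l. apply sumC_ext. intros k _.
      change (FT q None None (LA :: trw (repeat Pi cnt ++ Yl :: w)) (S k)) with
        (Cmult (tq q (S k)) (FW q (repeat Pi cnt ++ Yl :: w) (S k))).
      rewrite FW_rep, FW_Yl, Hs2. simpl repeat. simpl app.
      pose proof (z_nz (S k) ltac:(lia)) as Hz.
      unfold tq, xq. set (z := Cminus (RtoC 1) (Cpow q (S k))) in *.
      assert (Eq : Cpow q (S k) = Cminus (RtoC 1) z) by (unfold z; ring).
      rewrite Eq. rewrite Cinv_Cpow by auto. simpl Cpow at 1.
      set (X := sumC (fun j => FW q w j) (S k)). set (P := Cpow (Cinv z) cnt). field. auto.
Qed.

Lemma zword_eq w : (exists v, w = v ++ [Yl]) ->
  zword q w = climit (fun N => sumC (fun k => FT q None None (LA :: trw w) k) (S N)).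
Proof.
  intros H. destruct (zword_ok w 0 H) as [a1 [s [Hs1 Hs2]]].
  unfold zword, parse. rewrite Hs1. unfold zIII_s, climit. simpl repeat in Hs2. simpl app in Hs2.
  rewrite (Lim_seq_ext _ _ (fun N => f_equal Re (Hs2 N))), (Lim_seq_ext _ _ (fun N => f_equal Im (Hs2 N))). auto.
Qed.
End Parse.

Lemma climit_is (u : nat -> C) (a b : R) : is_lim_seq (fun N => Re (u N)) a -> is_lim_seq (fun N => Im (u N)) b ->
  climit u = (a, b).
Proof. intros H1 H2. unfold climit. rewrite (is_lim_seq_unique _ _ H1), (is_lim_seq_unique _ _ H2). auto. Qed.

Lemma climit_lsum (E : ncpoly) (f : word -> nat -> C) : (forall p, In p E -> convC (f (snd p))) ->
  convC (fun N => lsum E (fun w => f w N)) /\ climit (fun N => lsum E (fun w => f w N)) = lsum E (fun w => climit (f w)).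
Proof.
  induction E as [|p E IH]; intros H.
  - simpl. split. split; exists 0; apply is_lim_seq_const.
    rewrite (climit_is _ 0 0) by apply is_lim_seq_const. auto.
  - destruct IH as [[[a1 Ha1] [b1 Hb1]] E1]. intros; apply H; simpl; auto.
    destruct (H p (or_introl eq_refl)) as [[a2 Ha2] [b2 Hb2]].
    set (c := Q2R (fst p)).
    assert (LR : is_lim_seq (fun N => Re (lsum (p :: E) (fun w => f w N))) (c * a2 + a1)).
    { apply is_lim_seq_ext with (fun N => c * Re (f (snd p) N) + Re (lsum E (fun w => f w N))).
      intros N. simpl. unfold c, Re, Im. ring. apply is_lim_seq_plus'; auto. apply is_lim_seq_mult'; auto. apply is_lim_seq_const. }
    assert (LI : is_lim_seq (fun N => Im (lsum (p :: E) (fun w => f w N))) (c * b2 + b1)).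
    { apply is_lim_seq_ext with (fun N => c * Im (f (snd p) N) + Im (lsum E (fun w => f w N))).
      intros N. simpl. unfold c, Re, Im. ring. apply is_lim_seq_plus'; auto. apply is_lim_seq_mult'; auto. apply is_lim_seq_const. }
    split. split; eexists; eauto.
    rewrite (climit_is _ _ _ LR LI). change (lsum (p :: E) (fun w => climit (f w))) with (Cplus (Cmult (RtoC (Q2R (fst p))) (climit (f (snd p)))) (lsum E (fun w => climit (f w)))). rewrite <- E1.
    rewrite (climit_is _ _ _ Ha1 Hb1), (climit_is _ _ _ Ha2 Hb2). fold c.
    apply injective_projections; simpl; ring.
Qed.

Open Scope R_scope.

Definition strip (w : word) := skipn (lead_pi w) w.
Definition pure (E : ncpoly) := List.Forall (fun p => snd p = repeat Pi (length (snd p))) E.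
Definition evp (E : ncpoly) (z : C) := lsum E (fun w => Cpow z (length w)).

Lemma Q2R_1 : Q2R 1 = 1.
Proof. unfold Q2R. simpl. field. Qed.
Lemma Q2R_m1 : Q2R (-1 * 1) = -1.
Proof. unfold Q2R. simpl. field. Qed.


Lemma lsum_pref (B : ncpoly) c w f :
  lsum (map (fun r => (c * fst r, w ++ snd r)%Q) B) f = Cmult (RtoC (Q2R c)) (lsum B (fun v => f (w ++ v))).
Proof. induction B; simpl. ring. rewrite IHB, Q2R_mult, RtoC_mult. unfold word in *. ring. Qed.

Lemma lsum_mul A B f : lsum (nc_mul A B) f = lsum A (fun w => lsum B (fun v => f (w ++ v))).
Proof. induction A as [|p A IH]; simpl. auto. unfold nc_mul in *. simpl. rewrite lsum_app, IH, lsum_pref. auto. Qed.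

Lemma strip_rep n v : strip (repeat Pi n ++ v) = strip v.
Proof. induction n; simpl; auto. Qed.

Lemma pure_mul A B : pure A -> pure B -> pure (nc_mul A B).
Proof.
  unfold pure, nc_mul. intros HA HB. induction HA as [|p A Hp HA IH]; simpl. constructor.
  apply List.Forall_app. split; auto. clear IH HA. induction HB as [|r B Hr HB IH2]; simpl; constructor; auto.
  simpl. rewrite Hp, Hr, <- repeat_app, repeat_length. auto.
Qed.
Lemma pure_one : pure nc_one.
Proof. repeat constructor. Qed.
Lemma pure_rho : pure nc_rho.
Proof. repeat constructor. Qed.
Lemma pure_pow P n : pure P -> pure (nc_pow P n).
Proof. intros H. induction n; simpl. apply pure_one. apply pure_mul; auto. Qed.

Lemma evp_mul A B z : evp (nc_mul A B) z = Cmult (evp A z) (evp B z).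
Proof. unfold evp. rewrite lsum_mul. rewrite Cmult_comm, <- lsum_scal. apply lsum_ext. intros w.
  rewrite Cmult_comm, <- lsum_scal. apply lsum_ext. intros v. rewrite length_app, Cpow_add_r. cring. Qed.
Lemma evp_one z : evp nc_one z = RtoC 1.
Proof. unfold evp, nc_one. simpl. rewrite Q2R_1. ring. Qed.
Lemma evp_pow P n z : evp (nc_pow P n) z = Cpow (evp P z) n.
Proof. induction n. apply (evp_one z). change (nc_pow P (S n)) with (nc_mul P (nc_pow P n)). rewrite evp_mul, IHn. auto. Qed.
Lemma evp_rho z : evp nc_rho z = Cminus z (RtoC 1).
Proof. unfold evp, nc_rho, nc_sub, nc_add, nc_scale, nc_pi, nc_one. simpl. rewrite Q2R_1, Q2R_m1. ring. Qed.

Lemma Cpow1 n : Cpow (RtoC 1) n = RtoC 1.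
Proof. induction n; simpl; auto. rewrite IHn. ring. Qed.

Section Alg.
Variable q : C.
Hypothesis Hq : Cmod q < 1.

Definition V E k := lsum E (fun w => FW q w k).
Definition G1 E k := lsum E (fun w => FW q (strip w) k).

Lemma V_pure A B k : pure A -> V (nc_mul A B) k = Cmult (evp A (xq q k)) (V B k).
Proof.
  intros HA. unfold V, evp. rewrite lsum_mul. rewrite Cmult_comm, <- lsum_scal.
  induction HA as [|p A Hp HA IH]; simpl. auto. rewrite IH. f_equal. f_equal.
  destruct p as [c w0]. simpl in *. unfold word in *. set (n := length w0) in *. rewrite Hp.
  rewrite (lsum_ext _ _ (fun v => Cmult (Cpow (xq q k) n) (FW q v k))) by (intros; apply FW_rep).
  rewrite lsum_scal. cring.
Qed.
Lemma G1_pure A B k : pure A -> G1 (nc_mul A B) k = Cmult (evp A (RtoC 1)) (G1 B k).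
Proof.
  intros HA. unfold G1, evp. rewrite lsum_mul. rewrite Cmult_comm, <- lsum_scal.
  induction HA as [|p A Hp HA IH]; simpl. auto. rewrite IH. f_equal. f_equal.
  destruct p as [c w0]. simpl in *. unfold word in *. set (n := length w0) in *. rewrite Hp.
  rewrite (lsum_ext _ _ (fun v => FW q (strip v) k)) by (intros; rewrite strip_rep; auto).
  rewrite Cpow1. cring.
Qed.

Lemma nc_pow_y b : nc_pow nc_y b = [(1%Q, repeat Yl b)].
Proof. induction b; simpl. auto. rewrite IHb. reflexivity. Qed.

Lemma V_y b B wB : (forall k, V B k = FT q None None wB k) ->
  forall k, V (nc_mul (nc_pow nc_y b) B) k = FT q None None (repeat LB b ++ wB) k.
Proof.
  intros HB. rewrite nc_pow_y. unfold V in *.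
  assert (Key : forall k, lsum B (fun v => FW q (repeat Yl b ++ v) k) = FT q None None (repeat LB b ++ wB) k).
  { induction b; intros k. simpl. apply HB.
    rewrite (lsum_ext _ _ (fun v => sumC (fun i => FW q (repeat Yl b ++ v) i) k)) by (intros; apply FW_Yl).
    rewrite lsum_sumC. simpl. transitivity (sumC (fun i => FT q None None (repeat LB b ++ wB) i) k).
    apply sumC_ext. intros i _. apply IHb. apply sumC_rev. }
  intros k. rewrite lsum_mul. simpl. rewrite Q2R_1, Key. ring.
Qed.
End Alg.

Open Scope R_scope.

Lemma lead_decomp w : w = repeat Pi (lead_pi w) ++ strip w.
Proof. induction w as [|x w IH]; simpl; auto. destruct x; simpl; auto. unfold strip in *. simpl. f_equal. auto. Qed.
Lemma skipn_rep {T} (x : T) j m v : (j <= m)%nat -> skipn j (repeat x m ++ v) = repeat x (m - j) ++ v.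
Proof. revert m. induction j; intros m H; simpl. rewrite Nat.sub_0_r. auto. destruct m. lia. simpl. apply IHj. lia. Qed.

Lemma lsum_ext_in E f g : (forall p, In p E -> f (snd p) = g (snd p)) -> lsum E f = lsum E g.
Proof. induction E; simpl; intros H; auto. rewrite H, IHE; auto. Qed.

Lemma lsum_seq c w (f : word -> C) m :
  lsum (map (fun k => (c, skipn (S k) w)) (seq 0 m)) f = Cmult (RtoC (Q2R c)) (sumC (fun i => f (skipn (S i) w)) m).
Proof. induction m. simpl. ring. rewrite seq_S, map_app, lsum_app, IHm. simpl. ring. Qed.

Lemma geo_sum x m : Cmult (Cminus x (RtoC 1)) (sumC (fun i => Cpow x (m - 1 - i)) m) = Cminus (Cpow x m) (RtoC 1).
Proof.
  rewrite <- (sumC_rev (fun i => Cpow x i)). induction m. simpl. ring.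
  change (sumC (fun i => Cpow x i) (S m)) with (Cplus (sumC (fun i => Cpow x i) m) (Cpow x m)).
  rewrite Cmult_plus_distr_l, IHm. simpl. cring.
Qed.

Definition ends (w : word) := exists v, w = v ++ [Yl].
Definition EndY (E : ncpoly) := List.Forall (fun p => ends (snd p)) E.
Definition EndYo (E : ncpoly) := List.Forall (fun p => snd p = [] \/ ends (snd p)) E.

Lemma ends_rep_inv m s : ends (repeat Pi m ++ s) -> ends s.
Proof. induction m; simpl; auto. intros [v E]. destruct v as [|y v]. simpl in E. inversion E.
  apply IHm. exists v. simpl in E. inversion E. auto. Qed.

Lemma rho_inv_ends E : EndY E -> EndY (rho_inv E).
Proof.
  unfold EndY, rho_inv. intros H. induction H as [|p E Hp HE IH]; simpl. constructor.
  apply List.Forall_app. split; auto. apply List.Forall_forall. intros p' Hin. apply in_map_iff in Hin.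
  destruct Hin as [i [<- Hi]]. apply in_seq in Hi. destruct p as [c w0]. cbn [fst snd] in *. unfold word in *.
  change (ends (skipn (S i) w0)). rewrite (lead_decomp w0) in Hp. rewrite (lead_decomp w0). rewrite skipn_rep by lia.
  apply ends_rep_inv in Hp. destruct Hp as [v Ev]. rewrite Ev. exists (repeat Pi (lead_pi w0 - S i) ++ v).
  rewrite <- app_assoc. auto.
Qed.

Lemma lsum_cons p E f : lsum (p :: E) f = Cplus (Cmult (RtoC (Q2R (fst p))) (f (snd p))) (lsum E f).
Proof. reflexivity. Qed.

Section Z.
Variable q : C.
Hypothesis Hq : Cmod q < 1.

Lemma FW_decomp w k : FW q w k = Cmult (Cpow (xq q k) (lead_pi w)) (FW q (strip w) k).
Proof. rewrite (lead_decomp w) at 1. apply FW_rep. Qed.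

Lemma rho_inv_id E k : lsum (rho_inv E) (fun w => Cmult (tq q k) (FW q w k)) = Cminus (V q E k) (G1 q E k).
Proof.
  unfold rho_inv, V, G1. induction E as [|p E IH]. simpl. ring.
  cbn [flat_map]. rewrite lsum_app, IH, lsum_seq, !lsum_cons.
  rewrite (sumC_ext _ (fun i => Cmult (tq q k) (Cmult (Cpow (xq q k) (lead_pi (snd p) - 1 - i)) (FW q (strip (snd p)) k)))).
  2:{ intros i Hi. f_equal. destruct p as [c w0]. cbn [fst snd] in *. unfold word in *.
      transitivity (FW q (skipn (S i) (repeat Pi (lead_pi w0) ++ strip w0)) k). rewrite <- lead_decomp. auto.
      rewrite skipn_rep by lia. rewrite FW_rep. f_equal. f_equal. lia. }
  rewrite sumC_scal, (sumC_ext _ (fun i => Cmult (FW q (strip (snd p)) k) (Cpow (xq q k) (lead_pi (snd p) - 1 - i)))) by (intros; ring).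
  rewrite sumC_scal. rewrite (FW_decomp (snd p) k).
  set (F := FW q (strip (snd p)) k). set (S0 := sumC _ _).
  assert (G : Cmult (tq q k) S0 = Cminus (Cpow (xq q k) (lead_pi (snd p))) (RtoC 1)) by (apply geo_sum).
  transitivity (Cplus (Cmult (RtoC (Q2R (fst p))) (Cmult F (Cmult (tq q k) S0)))
    (Cminus (lsum E (fun w => FW q w k)) (lsum E (fun w => FW q (strip w) k)))). cring.
  rewrite G. cring.
Qed.

Lemma zIII_X E u : EndY E -> (forall k, Cminus (V q E k) (G1 q E k) = FT q None None (LA :: u ++ [LB]) k) ->
  zIII q E = climit (av q u).
Proof.
  intros HE HV.
  assert (HR := rho_inv_ends E HE).
  assert (Hw : forall p, In p (rho_inv E) -> exists u', trw (snd p) = u' ++ [LB]).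
  { intros p Hp. unfold EndY in HR. rewrite List.Forall_forall in HR. destruct (HR p Hp) as [v Ev].
    exists (trw v). rewrite Ev. unfold trw. rewrite map_app. auto. }
  change (zIII q E) with (lsum (rho_inv E) (zword q)).
  rewrite (lsum_ext_in _ _ (fun w => climit (fun N => sumC (fun k => FT q None None (LA :: trw w) k) (S N)))).
  2:{ intros p Hp. apply zword_eq; auto. unfold EndY in HR. rewrite List.Forall_forall in HR. apply HR; auto. }
  destruct (climit_lsum (rho_inv E) (fun w N => sumC (fun k => FT q None None (LA :: trw w) k) (S N))) as [_ E2].
  { intros p Hp. destruct (Hw p Hp) as [u' Eu]. rewrite Eu.
    destruct (av_conv q Hq u') as [[a Ha] [b Hb]]. split.
    exists a. apply (is_lim_seq_incr_1 (fun N => Re (av q u' N))). auto.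
    exists b. apply (is_lim_seq_incr_1 (fun N => Im (av q u' N))). auto. }
  rewrite <- E2.
  transitivity (climit (fun N => av q u (S N))).
  - unfold climit. f_equal; f_equal; apply Lim_seq_ext; intros N; f_equal;
    rewrite lsum_sumC; unfold av; apply sumC_ext; intros k _; rewrite <- HV, <- rho_inv_id; apply lsum_ext; intros w; reflexivity.
  - unfold climit. rewrite (Lim_seq_incr_1 (fun N => Re (av q u N))), (Lim_seq_incr_1 (fun N => Im (av q u N))). auto.
Qed.
End Z.

Open Scope R_scope.

Definition Rpoly (a b : nat -> nat) js :=
  nc_prod (flat_map (fun j => [nc_pow (nc_sub nc_pi nc_one) (a j); nc_pow nc_y (b j)]) js).
Definition Rword (a b : nat -> nat) js := flat_map (fun j => repeat LA (a j) ++ repeat LB (b j)) js.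

Lemma FT_repA q Ko Do n w k : FT q Ko Do (repeat LA n ++ w) k = Cmult (Cpow (TC q Ko k) n) (FT q Ko Do w k).
Proof. induction n; simpl. ring. rewrite IHn. ring. Qed.

Lemma EndY_mul A B : EndY B -> EndY (nc_mul A B).
Proof.
  unfold EndY, nc_mul. intros HB. induction A as [|p A IH]; simpl. constructor.
  apply List.Forall_app. split; auto. clear IH. induction HB as [|r B Hr HB IH2]; simpl; constructor; auto.
  destruct Hr as [v Ev]. exists (snd p ++ v). cbn [snd]. unfold word in *. rewrite Ev, app_assoc. auto.
Qed.
Lemma EndY_y b B : (1 <= b)%nat -> EndYo B -> EndY (nc_mul (nc_pow nc_y b) B).
Proof.
  intros Hb HB. rewrite nc_pow_y. unfold EndY, EndYo, nc_mul in *. simpl. rewrite app_nil_r.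
  induction HB as [|r B Hr HB IH]; simpl; constructor; auto. simpl.
  unfold word in *. destruct Hr as [Er|[v Ev]].
  - rewrite Er, app_nil_r. destruct b. lia. exists (repeat Yl b). simpl. apply repeat_cons.
  - exists (repeat Yl b ++ v). rewrite Ev, app_assoc. auto.
Qed.
Lemma EndY_o E : EndY E -> EndYo E.
Proof. unfold EndY, EndYo. intros H. induction H; constructor; auto. Qed.

Lemma EndYo_R a b js : (forall j, In j js -> (1 <= b j)%nat) -> EndYo (Rpoly a b js).
Proof.
  induction js as [|j js IH]; intros H. unfold Rpoly, EndYo. simpl. repeat constructor; auto.
  change (Rpoly a b (j :: js)) with (nc_mul (nc_pow (nc_sub nc_pi nc_one) (a j)) (nc_mul (nc_pow nc_y (b j)) (Rpoly a b js))).
  apply EndY_o, EndY_mul, EndY_y. apply H; simpl; auto. apply IH. intros; apply H; simpl; auto.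
Qed.

Section Fin.
Variable q : C.
Hypothesis Hq : Cmod q < 1.

Lemma evp_pw a z : evp (nc_pow (nc_sub nc_pi nc_one) a) z = Cpow (Cminus z (RtoC 1)) a.
Proof. rewrite evp_pow. change (nc_sub nc_pi nc_one) with nc_rho. rewrite evp_rho. auto. Qed.

Lemma V_R a b js : forall k, V q (Rpoly a b js) k = FT q None None (Rword a b js) k.
Proof.
  induction js as [|j js IH]; intros k.
  - unfold V, Rpoly, Rword. simpl. rewrite Q2R_1. unfold FW. simpl. ring.
  - change (Rpoly a b (j :: js)) with (nc_mul (nc_pow (nc_sub nc_pi nc_one) (a j)) (nc_mul (nc_pow nc_y (b j)) (Rpoly a b js))).
    rewrite V_pure by (apply pure_pow, pure_rho). rewrite evp_pw.
    rewrite (V_y q (b j) _ _ IH k). unfold Rword. simpl flat_map. rewrite <- app_assoc. rewrite FT_repA. auto.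
Qed.

Lemma Xgen a1 b1 Rp Rw : (forall k, V q Rp k = FT q None None Rw k) -> EndYo Rp -> (1 <= b1)%nat ->
  EndY (nc_mul (nc_pow (nc_sub nc_pi nc_one) (a1 - 1)) (nc_mul nc_rho (nc_mul (nc_pow nc_y b1) Rp))) /\
  forall k, Cminus (V q (nc_mul (nc_pow (nc_sub nc_pi nc_one) (a1 - 1)) (nc_mul nc_rho (nc_mul (nc_pow nc_y b1) Rp))) k)
                   (G1 q (nc_mul (nc_pow (nc_sub nc_pi nc_one) (a1 - 1)) (nc_mul nc_rho (nc_mul (nc_pow nc_y b1) Rp))) k)
   = FT q None None (repeat LA (a1 - 1) ++ LA :: repeat LB b1 ++ Rw) k.
Proof.
  intros HR HE Hb. split.
  - apply EndY_mul, EndY_mul, EndY_y; auto.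
  - intros k. rewrite V_pure, V_pure, G1_pure, G1_pure by (try apply pure_pow; apply pure_rho).
    rewrite (V_y q b1 _ _ HR k). rewrite !evp_pw, !evp_rho. rewrite FT_repA. simpl FT. unfold TC, tq. cring.
Qed.
End Fin.

Lemma tau_app u v : tau (u ++ v) = tau v ++ tau u.
Proof. unfold tau. rewrite map_app, rev_app_distr. auto. Qed.
Lemma tau_rep x n : tau (repeat x n) = repeat (swap x) n.
Proof. unfold tau. rewrite map_repeat, rev_repeat. auto. Qed.
Lemma tau_R a b js : tau (Rword a b js) = Rword b a (rev js).
Proof.
  induction js as [|j js IH]; simpl; auto. unfold Rword in *. simpl.
  rewrite tau_app, IH, flat_map_app, tau_app, !tau_rep. simpl. rewrite app_nil_r. auto.
Qed.

Lemma noP_rep x n : x <> LP -> noP (repeat x n) = true.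
Proof. intros H. induction n; simpl; auto. destruct x; auto. Qed.

Lemma R_shape a b js : js <> [] -> (forall j, In j js -> (1 <= a j)%nat /\ (1 <= b j)%nat) ->
  exists u, Rword a b js = LA :: u ++ [LB] /\ noP u = true.
Proof.
  induction js as [|j js IH]; intros Hn H. congruence.
  destruct (H j (or_introl eq_refl)) as [Ha Hb].
  change (Rword a b (j :: js)) with ((repeat LA (a j) ++ repeat LB (b j)) ++ Rword a b js).
  destruct (a j) as [|a'] eqn:Ea. lia. destruct (b j) as [|b'] eqn:Eb. lia.
  destruct js as [|j' js'].
  - exists (repeat LA a' ++ repeat LB b'). unfold Rword. simpl flat_map. rewrite !app_nil_r. split.
    simpl. rewrite repeat_cons, app_assoc. auto.
    apply noP_app. split; apply noP_rep; discriminate.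
  - destruct IH as [u [Eu Pu]]. discriminate. intros; apply H; simpl; auto.
    rewrite Eu.
    exists (repeat LA a' ++ repeat LB (S b') ++ LA :: u). split.
    simpl. rewrite <- !app_assoc. simpl. rewrite <- !app_assoc. reflexivity.
    apply noP_app. split. apply noP_rep; discriminate. apply noP_app. split. apply noP_rep; discriminate. simpl. auto.
Qed.

Close Scope R_scope.

Lemma hv_dual_eq q u u' : tau (LA :: u ++ [LB]) = LA :: u' ++ [LB] -> climit (hv q u) = climit (hv q u').
Proof.
  intros Ht. unfold climit. f_equal; f_equal; apply Lim_seq_ext; intros K; f_equal; unfold hv; cbv zeta;
  rewrite <- Ht; rewrite J_dual; auto.
Qed.

Theorem theorem8p4 (q : C) (hq : (Cmod q < 1)%R) (l : nat)
  (alpha beta : nat -> nat) (hl : (1 <= l)%nat)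
  (hab : forall j : nat, (1 <= j <= l)%nat -> (1 <= alpha j)%nat /\ (1 <= beta j)%nat) :
  zIII q (nc_prod
            ([nc_pow (nc_sub nc_pi nc_one) (alpha 1%nat - 1); nc_rho; nc_pow nc_y (beta 1%nat)]
             ++ flat_map (fun j => [nc_pow (nc_sub nc_pi nc_one) (alpha j); nc_pow nc_y (beta j)])
                         (seq 2 (l - 1))))
  = zIII q (nc_prod
            ([nc_pow (nc_sub nc_pi nc_one) (beta l - 1); nc_rho; nc_pow nc_y (alpha l)]
             ++ flat_map (fun j => [nc_pow (nc_sub nc_pi nc_one) (beta j); nc_pow nc_y (alpha j)])
                         (rev (seq 1 (l - 1))))).
Proof.
  change (nc_prod ([nc_pow (nc_sub nc_pi nc_one) (alpha 1%nat - 1); nc_rho; nc_pow nc_y (beta 1%nat)]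
             ++ flat_map (fun j => [nc_pow (nc_sub nc_pi nc_one) (alpha j); nc_pow nc_y (beta j)]) (seq 2 (l - 1))))
    with (nc_mul (nc_pow (nc_sub nc_pi nc_one) (alpha 1%nat - 1)) (nc_mul nc_rho (nc_mul (nc_pow nc_y (beta 1%nat))
            (Rpoly alpha beta (seq 2 (l - 1)))))).
  change (nc_prod ([nc_pow (nc_sub nc_pi nc_one) (beta l - 1); nc_rho; nc_pow nc_y (alpha l)]
             ++ flat_map (fun j => [nc_pow (nc_sub nc_pi nc_one) (beta j); nc_pow nc_y (alpha j)]) (rev (seq 1 (l - 1)))))
    with (nc_mul (nc_pow (nc_sub nc_pi nc_one) (beta l - 1)) (nc_mul nc_rho (nc_mul (nc_pow nc_y (alpha l))
            (Rpoly beta alpha (rev (seq 1 (l - 1))))))).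
  assert (H1 := hab 1%nat ltac:(lia)). assert (Hl := hab l ltac:(lia)).
  assert (Hseq : seq 1 l = 1%nat :: seq 2 (l - 1)) by (destruct l; [lia|simpl; rewrite Nat.sub_0_r; auto]).
  assert (Hrev : rev (seq 1 l) = l :: rev (seq 1 (l - 1))).
  { destruct l. lia. rewrite seq_S. rewrite rev_app_distr. simpl. rewrite Nat.sub_0_r. auto. }
  destruct (Xgen q (alpha 1%nat) (beta 1%nat) (Rpoly alpha beta (seq 2 (l - 1))) (Rword alpha beta (seq 2 (l - 1))))
    as [EL VL].
  { apply V_R. }
  { apply EndYo_R. intros j Hj. apply in_seq in Hj. apply hab. lia. }
  { lia. }
  destruct (Xgen q (beta l) (alpha l) (Rpoly beta alpha (rev (seq 1 (l - 1)))) (Rword beta alpha (rev (seq 1 (l - 1)))))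
    as [ER VR].
  { apply V_R. }
  { apply EndYo_R. intros j Hj. apply in_rev in Hj. apply in_seq in Hj. apply hab. lia. }
  { lia. }
  assert (WL : repeat LA (alpha 1%nat - 1) ++ LA :: repeat LB (beta 1%nat) ++ Rword alpha beta (seq 2 (l - 1))
               = Rword alpha beta (seq 1 l)).
  { rewrite Hseq. change (Rword alpha beta (1%nat :: seq 2 (l - 1))) with
      ((repeat LA (alpha 1%nat) ++ repeat LB (beta 1%nat)) ++ Rword alpha beta (seq 2 (l - 1))).
    destruct (alpha 1%nat) as [|a1]. lia. rewrite rep_snoc. simpl. rewrite Nat.sub_0_r, <- app_assoc. auto. }
  assert (WR : repeat LA (beta l - 1) ++ LA :: repeat LB (alpha l) ++ Rword beta alpha (rev (seq 1 (l - 1)))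
               = Rword beta alpha (rev (seq 1 l))).
  { rewrite Hrev. change (Rword beta alpha (l :: rev (seq 1 (l - 1)))) with
      ((repeat LA (beta l) ++ repeat LB (alpha l)) ++ Rword beta alpha (rev (seq 1 (l - 1)))).
    destruct (beta l) as [|b1]. lia. rewrite rep_snoc. simpl. rewrite Nat.sub_0_r, <- app_assoc. auto. }
  destruct (R_shape alpha beta (seq 1 l)) as [u [Eu Pu]].
  { rewrite Hseq. discriminate. }
  { intros j Hj. apply in_seq in Hj. apply hab. lia. }
  destruct (R_shape beta alpha (rev (seq 1 l))) as [u' [Eu' Pu']].
  { rewrite Hrev. discriminate. }
  { intros j Hj. apply in_rev in Hj. apply in_seq in Hj. destruct (hab j ltac:(lia)). auto. }
  rewrite (zIII_X q hq _ u EL). 2:{ intros k. rewrite VL, WL, Eu. auto. }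
  rewrite (zIII_X q hq _ u' ER). 2:{ intros k. rewrite VR, WR, Eu'. auto. }
  rewrite (climit_av_hv q hq u Pu), (climit_av_hv q hq u' Pu').
  apply hv_dual_eq. rewrite <- Eu, <- Eu'. apply tau_R.
Qed.
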